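(* Let $d\in\mathbb{N}^+$, $a<b$, let $f\in C([a,b]^d)$, and let $N=36d(2d+1)$ and $L=11$. Then for every $\varepsilon>0$ there exists $\phi\in\mathscr{H}_d(N,L)$ such that $|\phi(\boldsymbol{x})-f(\boldsymbol{x})|<\varepsilon$ for all $\boldsymbol{x}\in[a,b]^d$.
   Context: Let $\sigma_1:\mathbb{R}\to\mathbb{R}$ be the continuous triangular-wave function of period $2$: $\sigma_1(x)=|x|$ for $x\in[-1,1]$ and $\sigma_1(x+2)=\sigma_1(x)$ for all $x$ (equivalently $\sigma_1(x)=|x-2\lfloor (x+1)/2\rfloor|$). Let $\sigma_2(x)=x/(|x|+1)$ (softsign). The activation function (EUAF) is $\sigma(x)=\sigma_1(x)$ for $x\ge 0$ and $\sigma(x)=\sigma_2(x)$ for $x<0$; it is applied to vectors entrywise. For $N,L\in\mathbb{N}^+$, $\mathscr{H}_d(N,L)$ is the set of all functions $\phi:\mathbb{R}^d\to\mathbb{R}$ of the form $\phi=\mathcal{L}_L\circ\sigma\circ\mathcal{L}_{L-1}\circ\cdots\circ\sigma\circ\mathcal{L}_1\circ\sigma\circ\mathcal{L}_0$, where $\mathcal{L}_0:\mathbb{R}^d\to\mathbb{R}^N$, $\mathcal{L}_i:\mathbb{R}^N\to\mathbb{R}^N$ for $1\le i\le L-1$, and $\mathcal{L}_L:\mathbb{R}^N\to\mathbb{R}$ are arbitrary affine maps (real weight matrices and bias vectors); i.e. functions computed by $\sigma$-activated feed-forward networks with $L$ hidden layers each having exactly $N$ neurons. *)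

(* Defs.v *)
From Stdlib Require Import Reals Lra Lia.
Open Scope R_scope.

(* Vectors in R^n are represented as functions nat -> R, of which only the
   coordinates 0..n-1 are meaningful. *)

Fixpoint sumn (n : nat) (f : nat -> R) : R :=
  match n with
  | O => 0
  | S m => sumn m f + f m
  end.

Definition sigma1 (x : R) : R := Rabs (x - 2 * IZR (Int_part ((x + 1) / 2)) ).
(* note: Int_part is floor on R (Stdlib: Int_part r = up r - 1). *)

Definition sigma2 (x : R) : R := x / (Rabs x + 1).

Definition sigma (x : R) : R := if Rle_dec 0 x then sigma1 x else sigma2 x.

Definition affine (m : nat) (W : nat -> nat -> R) (c : nat -> R) (x : nat -> R)
  : nat -> R := fun i => sumn m (fun j => W i j * x j) + c i.

Fixpoint hidden (N : nat) (k : nat) (Ws : nat -> nat -> nat -> R)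
   (cs : nat -> nat -> R) (h : nat -> R) : nat -> R :=
  match k with
  | O => h
  | S k' => fun i => sigma (affine N (Ws k) (cs k) (hidden N k' Ws cs h) i)
  end.

(* Network in H_d(N,L):
   phi = L_L o sigma o L_{L-1} o ... o sigma o L_1 o sigma o L_0, L hidden layers
   of width N, arbitrary real affine maps. *)
Definition network (d N L : nat) (W0 : nat -> nat -> R) (c0 : nat -> R)
  (Ws : nat -> nat -> nat -> R) (cs : nat -> nat -> R)
  (WL : nat -> R) (cL : R) (x : nat -> R) : R :=
  let h1 := fun i => sigma (affine d W0 c0 x i) in
  let hL := hidden N (L - 1) Ws cs h1 in
  sumn N (fun j => WL j * hL j) + cL.

Definition in_H (d N L : nat) (phi : (nat -> R) -> R) : Prop :=
  exists W0 c0 Ws cs WL cL,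
    forall x, phi x = network d N L W0 c0 Ws cs WL cL x.

Definition in_cube (d : nat) (a b : R) (x : nat -> R) : Prop :=
  forall i, (i < d)%nat -> a <= x i <= b.

Definition cont_on_cube (d : nat) (a b : R) (f : (nat -> R) -> R) : Prop :=
  (forall x y, (forall i, (i < d)%nat -> x i = y i) -> f x = f y) /\
  forall x, in_cube d a b x ->
    forall eps, eps > 0 -> exists delta, delta > 0 /\
      forall y, in_cube d a b y ->
        (forall i, (i < d)%nat -> Rabs (y i - x i) < delta) ->
        Rabs (f y - f x) < eps.

(* Main.v *)
Require Import Defs.
From Stdlib Require Import Reals Lra Lia ZArith Factorial Classical ClassicalEpsilon IndefiniteDescription.
Import Defs.
Open Scope R_scope.

Lemma Int_part_unique : forall r (z:Z), IZR z <= r < IZR z + 1 -> Int_part r = z.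
Proof.
  intros r z [H1 H2]. unfold Int_part.
  assert (E : (z + 1)%Z = up r).
  { apply tech_up; rewrite plus_IZR; lra. }
  rewrite <- E. lia.
Qed.

Lemma sigma1_rep : forall (q:Z) y, -1 <= y < 1 -> sigma1 (2*IZR q + y) = Rabs y.
Proof.
  intros q y Hy. unfold sigma1.
  rewrite (Int_part_unique _ q) by lra.
  f_equal; ring.
Qed.

Lemma sigma1_decomp : forall x, exists q:Z, exists y, -1 <= y < 1 /\ x = 2*IZR q + y.
Proof.
  intros x. exists (Int_part ((x+1)/2)). exists (x - 2*IZR (Int_part ((x+1)/2))).
  destruct (base_Int_part ((x+1)/2)) as [H1 H2]. split; [split|]; lra.
Qed.

Lemma sigma1_bound : forall x, 0 <= sigma1 x <= 1.
Proof.
  intros x. destruct (sigma1_decomp x) as [q [y [Hy ->]]].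
  rewrite sigma1_rep by lra. unfold Rabs; destruct Rcase_abs; lra.
Qed.

Lemma sigma1_per : forall x (z:Z), sigma1 (x + 2*IZR z) = sigma1 x.
Proof.
  intros x z. destruct (sigma1_decomp x) as [q [y [Hy ->]]].
  replace (2 * IZR q + y + 2 * IZR z) with (2 * IZR (q+z) + y) by (rewrite plus_IZR; ring).
  rewrite !sigma1_rep by lra. reflexivity.
Qed.

Lemma sigma1_id : forall y, 0 <= y <= 1 -> sigma1 y = y.
Proof.
  intros y Hy. destruct (Req_dec y 1) as [->|Hne].
  - replace 1 with (2*IZR 1 + -1) by (simpl; ring). rewrite sigma1_rep by lra.
    rewrite Rabs_left by lra. lra.
  - replace y with (2*IZR 0 + y) by (simpl; ring). rewrite sigma1_rep by lra.
    rewrite Rabs_right by lra. ring.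
Qed.

Lemma sigma1_abs2 : forall y, -1 <= y <= 1 -> sigma1 (y + 2) = Rabs y.
Proof.
  intros y Hy. replace (y+2) with (y + 2*IZR 1) by (simpl; ring).
  rewrite sigma1_per. destruct (Req_dec y 1) as [->|Hne].
  - rewrite sigma1_id by lra. rewrite Rabs_right; lra.
  - replace y with (2*IZR 0 + y) at 1 by (simpl; ring). rewrite sigma1_rep by lra. reflexivity.
Qed.

Lemma sigma1_fold : forall r, 0 <= r <= 1 -> sigma1 (1 + r) = 1 - r.
Proof.
  intros r Hr. replace (1 + r) with (2*IZR 1 + (r-1)) by (simpl; ring).
  rewrite sigma1_rep by lra. rewrite Rabs_left1 by lra. ring.
Qed.

Lemma sigma1_Lip : forall x y, Rabs (sigma1 x - sigma1 y) <= Rabs (x - y).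
Proof.
  intros x y.
  destruct (Rle_lt_dec 1 (Rabs (x-y))) as [Hb|Hs].
  - pose proof (sigma1_bound x); pose proof (sigma1_bound y).
    unfold Rabs at 1; destruct Rcase_abs; lra.
  - destruct (sigma1_decomp x) as [q [r [Hr ->]]].
    rewrite sigma1_rep by lra.
    set (s := y - 2*IZR q).
    assert (Hy : y = 2*IZR q + s) by (unfold s; ring).
    rewrite Hy in Hs |- *.
    replace (2 * IZR q + r - (2 * IZR q + s)) with (r - s) in * by ring.
    assert (Hs2 : -1 < r - s < 1) by (unfold Rabs in Hs; destruct Rcase_abs in Hs; lra).
    destruct (Rlt_le_dec s (-1)) as [H1|H1].
    + replace (2 * IZR q + s) with (2*IZR (q-1) + (s+2)) by (rewrite minus_IZR; simpl; ring).
      rewrite sigma1_rep by lra.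
      unfold Rabs; repeat destruct Rcase_abs; lra.
    + destruct (Rlt_le_dec s 1) as [H2|H2].
      * rewrite sigma1_rep by lra. unfold Rabs; repeat destruct Rcase_abs; lra.
      * replace (2 * IZR q + s) with (2*IZR (q+1) + (s-2)) by (rewrite plus_IZR; simpl; ring).
        rewrite sigma1_rep by lra.
        unfold Rabs; repeat destruct Rcase_abs; lra.
Qed.

Lemma sigma_pos : forall x, 0 <= x -> sigma x = sigma1 x.
Proof. intros x H. unfold sigma. destruct (Rle_dec 0 x); [reflexivity| lra]. Qed.

Lemma sigma_neg : forall x, x < 0 -> sigma x = x / (1 - x).
Proof.
  intros x H. unfold sigma. destruct (Rle_dec 0 x); [lra|].
  unfold sigma2. rewrite Rabs_left by lra. f_equal; ring.
Qed.

Lemma sigma_bound : forall x, Rabs (sigma x) <= 1.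
Proof.
  intros x. destruct (Rle_dec 0 x) as [H|H].
  - rewrite sigma_pos by lra. pose proof (sigma1_bound x). rewrite Rabs_right; lra.
  - rewrite sigma_neg by lra.
    assert (E : x / (1 - x) = -1 + / (1 - x)) by (field; lra).
    rewrite E. assert (H0 : 0 < / (1 - x)) by (apply Rinv_0_lt_compat; lra).
    assert (H1 : / (1 - x) * (1 - x) = 1) by (field; lra).
    assert (H2 : / (1 - x) < 1) by nra.
    unfold Rabs; destruct Rcase_abs; lra.
Qed.

Lemma sigma_id : forall y, 0 <= y <= 1 -> sigma y = y.
Proof. intros. rewrite sigma_pos by lra. apply sigma1_id; lra. Qed.

Lemma sigma_abs : forall z Z, 0 < Z -> Rabs z <= Z -> Z * sigma (z / Z + 2) = Rabs z.
Proof.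
  intros z Z HZ Hz.
  assert (H1 : -1 <= z / Z <= 1).
  { split.
    - apply Rmult_le_reg_r with Z; [lra|]. unfold Rdiv; rewrite Rmult_assoc, Rinv_l by lra.
      unfold Rabs in Hz; destruct Rcase_abs in Hz; lra.
    - apply Rmult_le_reg_r with Z; [lra|]. unfold Rdiv; rewrite Rmult_assoc, Rinv_l by lra.
      unfold Rabs in Hz; destruct Rcase_abs in Hz; lra. }
  rewrite sigma_pos by lra. rewrite sigma1_abs2 by lra.
  unfold Rdiv. rewrite Rabs_mult, (Rabs_right (/ Z)) by (left; apply Rinv_0_lt_compat; lra).
  field. lra.
Qed.

Definition clip01 (z : R) : R := (Rabs z - Rabs (z - 1) + 1) / 2.

Lemma clip01_bound : forall z, 0 <= clip01 z <= 1.
Proof. intros z; unfold clip01; unfold Rabs; repeat destruct Rcase_abs; lra. Qed.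
Lemma clip01_id : forall z, 0 <= z <= 1 -> clip01 z = z.
Proof. intros z H; unfold clip01; unfold Rabs; repeat destruct Rcase_abs; lra. Qed.
Lemma clip01_le0 : forall z, z <= 0 -> clip01 z = 0.
Proof. intros z H; unfold clip01; unfold Rabs; repeat destruct Rcase_abs; lra. Qed.
Lemma clip01_ge1 : forall z, 1 <= z -> clip01 z = 1.
Proof. intros z H; unfold clip01; unfold Rabs; repeat destruct Rcase_abs; lra. Qed.
Lemma clip01_pos : forall z, 0 < clip01 z -> 0 < z.
Proof. intros z; unfold clip01; unfold Rabs; repeat destruct Rcase_abs; lra. Qed.
Lemma clip01_le : forall z, clip01 z <= Rmax 0 z.
Proof. intros z; unfold clip01, Rmax; destruct Rle_dec; unfold Rabs; repeat destruct Rcase_abs; lra. Qed.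

Lemma sumn_ext : forall n f g, (forall j, (j < n)%nat -> f j = g j) -> sumn n f = sumn n g.
Proof.
  induction n; intros f g H; simpl; [reflexivity|].
  rewrite (IHn f g) by (intros; apply H; lia). rewrite H by lia. reflexivity.
Qed.

Lemma sumn_plus : forall n f g, sumn n (fun j => f j + g j) = sumn n f + sumn n g.
Proof. induction n; intros; simpl; [ring|]. rewrite IHn. ring. Qed.

Lemma sumn_scal : forall n c f, sumn n (fun j => c * f j) = c * sumn n f.
Proof. induction n; intros; simpl; [ring|]. rewrite IHn. ring. Qed.

Lemma sumn_minus : forall n f g, sumn n (fun j => f j - g j) = sumn n f - sumn n g.
Proof. induction n; intros; simpl; [ring|]. rewrite IHn. ring. Qed.

Lemma sumn_const0 : forall n f, (forall j, (j < n)%nat -> f j = 0) -> sumn n f = 0.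
Proof. induction n; intros f H; simpl; [reflexivity|]. rewrite IHn, H by (intros; try apply H; lia). ring. Qed.

Lemma sumn_shift : forall n f, sumn (S n) f = f 0%nat + sumn n (fun j => f (S j)).
Proof.
  induction n; intros f; simpl in *; [ring|].
  rewrite IHn. simpl. ring.
Qed.

Lemma sumn_le : forall n f g, (forall j, (j < n)%nat -> f j <= g j) -> sumn n f <= sumn n g.
Proof.
  induction n; intros f g H; simpl; [lra|].
  pose proof (IHn f g (fun j Hj => H j ltac:(lia))). pose proof (H n ltac:(lia)). lra.
Qed.

Lemma sumn_abs : forall n f, Rabs (sumn n f) <= sumn n (fun j => Rabs (f j)).
Proof.
  induction n; intros f; simpl.
  - rewrite Rabs_R0; lra.
  - eapply Rle_trans; [apply Rabs_triang|]. specialize (IHn f); lra.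
Qed.

Lemma sumn_nonneg : forall n f, (forall j, (j < n)%nat -> 0 <= f j) -> 0 <= sumn n f.
Proof.
  intros n f H. replace 0 with (sumn n (fun _ => 0)) by (apply sumn_const0; auto).
  apply sumn_le; auto.
Qed.

Lemma sumn_delta : forall n a alpha v, (a < n)%nat ->
  sumn n (fun j => (if Nat.eqb j a then alpha else 0) * v j) = alpha * v a.
Proof.
  induction n; intros a alpha v Ha; [lia|]. simpl.
  destruct (Nat.eq_dec a n) as [->|Hne].
  - rewrite Nat.eqb_refl. rewrite sumn_const0; [ring|].
    intros j Hj. destruct (Nat.eqb_spec j n); [lia|ring].
  - rewrite IHn by lia. destruct (Nat.eqb_spec n a); [lia|ring].
Qed.

Lemma sumn_swap : forall n m F,
  sumn n (fun j => sumn m (fun l => F l j)) = sumn m (fun l => sumn n (fun j => F l j)).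
Proof.
  induction n; intros m F; simpl.
  - symmetry; apply sumn_const0; auto.
  - rewrite IHn. rewrite <- sumn_plus. reflexivity.
Qed.

Fixpoint binom (n k : nat) : nat :=
  match n, k with
  | _, O => 1%nat
  | O, S _ => 0%nat
  | S n', S k' => (binom n' k' + binom n' (S k'))%nat
  end.

Lemma binom_gt : forall n k, (n < k)%nat -> binom n k = 0%nat.
Proof.
  induction n; intros k H; destruct k; simpl; try lia; try reflexivity.
  rewrite !IHn by lia. reflexivity.
Qed.

Fixpoint diffn (j : nat) (h : nat -> R) : nat -> R :=
  match j with
  | O => h
  | S j' => fun n => diffn j' h (S n) - diffn j' h n
  end.

Lemma diffn_shift : forall j h n, diffn j (fun k => h (S k)) n = diffn j h (S n).
Proof. induction j; intros h n; simpl; [reflexivity|]. rewrite !IHj. reflexivity. Qed.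

Lemma newton : forall n h, h n = sumn (S n) (fun j => INR (binom n j) * diffn j h 0).
Proof.
  induction n; intros h.
  - simpl. ring.
  - change (h (S n)) with ((fun k => h (S k)) n). rewrite IHn.
    rewrite (sumn_ext _ _ (fun j => INR (binom n j) * diffn j h 0 + INR (binom n j) * diffn (S j) h 0)).
    2:{ intros j Hj. rewrite diffn_shift. simpl. ring. }
    rewrite sumn_plus.
    assert (R1 : sumn (S (S n)) (fun j => INR (binom (S n) j) * diffn j h 0) =
       diffn 0 h 0 + sumn (S n) (fun j => INR (binom n j) * diffn (S j) h 0)
        + sumn (S n) (fun j => INR (binom n (S j)) * diffn (S j) h 0)).
    { rewrite sumn_shift. rewrite Rplus_assoc, <- sumn_plus. simpl (binom (S n) 0).
      f_equal; [simpl; ring|]. apply sumn_ext. intros j Hj.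
      change (binom (S n) (S j)) with (binom n j + binom n (S j))%nat. rewrite plus_INR. ring. }
    rewrite R1. clear R1.
    rewrite (sumn_shift n (fun j => INR (binom n j) * diffn j h 0)).
    simpl (sumn (S n) (fun j => INR (binom n (S j)) * diffn (S j) h 0)).
    rewrite (binom_gt n (S n)) by lia.
    replace (binom n 0) with 1%nat by (destruct n; reflexivity).
    simpl INR. cbn [diffn]. ring.
Qed.

Fixpoint Pr (j : nat) (y : R) : R :=
  match j with
  | O => y
  | S j' => Pr j' y * (y - INR (S j'))
  end.

Lemma Pr_pos : forall j y, INR j < y -> 0 < Pr j y.
Proof.
  induction j; intros y H.
  - simpl in *; lra.
  - change (Pr (S j) y) with (Pr j y * (y - INR (S j))). rewrite S_INR in *.
    apply Rmult_lt_0_compat; [apply IHj|]; lra.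
Qed.

Lemma Pr_shift : forall j y, Pr (S j) y = y * Pr j (y - 1).
Proof.
  induction j; intros y.
  - simpl. ring.
  - change (Pr (S (S j)) y) with (Pr (S j) y * (y - INR (S (S j)))).
    rewrite IHj. change (Pr (S j) (y - 1)) with (Pr j (y-1) * (y - 1 - INR (S j))). rewrite !S_INR. ring.
Qed.

Lemma diffn_code : forall P j n, INR (n + j) + 1 < P ->
  diffn j (fun k => / (P - INR k)) n = INR (fact j) / Pr j (P - INR n).
Proof.
  intros P. induction j; intros n H.
  - simpl. unfold Rdiv. ring.
  - simpl diffn. rewrite plus_INR, S_INR in H.
    rewrite !IHj by (rewrite plus_INR; try rewrite S_INR; lra).
    assert (Hy : INR j + 1 < P - INR n) by lra.
    pose proof (Pr_pos j (P - INR n) ltac:(lra)) as H1.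
    pose proof (Pr_pos j (P - INR n - 1) ltac:(lra)) as H2.
    assert (E1 : Pr (S j) (P - INR n) = (P - INR n) * Pr j (P - INR n - 1)) by apply Pr_shift.
    assert (E2 : Pr (S j) (P - INR n) = Pr j (P - INR n) * (P - INR n - INR (S j))) by reflexivity.
    rewrite S_INR in E2. rewrite S_INR.
    replace (P - (INR n + 1)) with (P - INR n - 1) by ring.
    change (fact (S j)) with ((S j) * fact j)%nat. rewrite mult_INR, S_INR.
    assert (Hd : Pr (S j) (P - INR n) <> 0) by (rewrite E2; apply Rmult_integral_contrapositive; split; lra).
    apply (Rmult_eq_reg_r (Pr (S j) (P - INR n))); [|exact Hd].
    unfold Rdiv. rewrite Rmult_minus_distr_r.
    rewrite E1 at 1. rewrite E2.
    field. repeat split; lra.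
Qed.

Lemma find_z : forall A D e, 0 < D -> exists z : Z, A <= (e + 2 * IZR z) / D <= A + 2 / D.
Proof.
  intros A D e HD. exists (up ((A * D - e) / 2)).
  destruct (archimed ((A * D - e) / 2)) as [H1 H2].
  set (u := IZR (up ((A * D - e) / 2))) in *.
  split.
  - apply Rmult_le_reg_r with D; [lra|].
    replace ((e + 2 * u) / D * D) with (e + 2 * u) by (field; lra). lra.
  - apply Rmult_le_reg_r with D; [lra|].
    replace ((e + 2 * u) / D * D) with (e + 2 * u) by (field; lra).
    replace ((A + 2 / D) * D) with (A * D + 2) by (field; lra). lra.
Qed.

Lemma nested : forall (M : nat) (D e : nat -> R) eta, 0 < eta <= 1 ->
  (forall j, (j <= M)%nat -> 0 < D j) ->
  (forall j, (j < M)%nat -> 4 * D (S j) <= eta * D j) ->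
  exists w, 0 <= w /\ forall j, (j < M)%nat -> exists z : Z, Rabs (w * D j - e j - 2 * IZR z) <= eta.
Proof.
  intros M D e eta Heta HD Hr.
  assert (Main : forall i, (i <= M)%nat -> exists c, 0 <= c /\ forall w, c <= w <= c + eta / D (M - i)%nat ->
            forall j, (M - i <= j < M)%nat -> exists z : Z, Rabs (w * D j - e j - 2 * IZR z) <= eta).
  { induction i; intros Hi.
    - exists 0. split; [lra|]. intros w Hw j Hj. lia.
    - destruct (IHi ltac:(lia)) as [c [Hc Hw]].
      set (k := (M - S i)%nat).
      assert (Hk1 : (M - i)%nat = S k) by (unfold k; lia).
      rewrite Hk1 in Hw.
      assert (Dk : 0 < D k) by (apply HD; lia).
      assert (Dk1 : 0 < D (S k)) by (apply HD; lia).
      assert (Rk : 4 * D (S k) <= eta * D k) by (apply Hr; lia).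
      destruct (find_z (c + eta / (2 * D k)) (D k) (e k) Dk) as [z [Hz1 Hz2]].
      set (ws := (e k + 2 * IZR z) / D k) in *.
      exists (ws - eta / (2 * D k)). split.
      { assert (0 < eta / (2 * D k)) by (apply Rdiv_lt_0_compat; lra). lra. }
      assert (Hle : c + eta / (2 * D k) + 2 / D k + eta / (2 * D k) <= c + eta / D (S k)).
      { assert (E : eta / (2 * D k) + 2 / D k + eta / (2 * D k) = (eta + 2) / D k) by (field; lra).
        assert ((eta + 2) / D k <= eta / D (S k)).
        { apply Rmult_le_reg_r with (D k * D (S k)); [nra|].
          unfold Rdiv. replace ((eta + 2) * / D k * (D k * D (S k))) with ((eta+2) * D (S k)) by (field; lra).
          replace (eta * / D (S k) * (D k * D (S k))) with (eta * D k) by (field; lra). nra. }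
        lra. }
      intros w Hw2 j Hj.
      assert (Hwin : c <= w <= c + eta / D (S k)).
      { assert (eta / D k = 2 * (eta / (2 * D k))) by (field; lra). split; lra. }
      destruct (Nat.eq_dec j k) as [->|Hne].
      + exists z. 
        assert (E : w * D k - e k - 2 * IZR z = (w - ws) * D k) by (unfold ws; field; lra).
        rewrite E, Rabs_mult, (Rabs_right (D k)) by lra.
        assert (Habs : Rabs (w - ws) <= eta / (2 * D k)).
        { assert (eta / D k = 2 * (eta / (2 * D k))) by (field; lra).
          unfold Rabs; destruct Rcase_abs; lra. }
        apply Rle_trans with (eta / (2 * D k) * D k); [apply Rmult_le_compat_r; lra|].
        replace (eta / (2 * D k) * D k) with (eta / 2) by (field; lra). lra.
      + apply Hw; [exact Hwin| unfold k in *; lia]. }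
  destruct (Main M (le_n M)) as [c [Hc Hw]].
  exists c. split; [exact Hc|]. intros j Hj. apply (Hw c).
  - split; [lra|]. assert (0 < eta / D (M - M)%nat) by (apply Rdiv_lt_0_compat; [lra| apply HD; lia]). lra.
  - lia.
Qed.

Lemma combine_int : forall L (c : nat -> nat) (a : nat -> R) eta,
  (forall j, (j < L)%nat -> exists z : Z, Rabs (a j - 2 * IZR z) <= eta) ->
  exists Z0 : Z, Rabs (sumn L (fun j => INR (c j) * a j) - 2 * IZR Z0) <= eta * sumn L (fun j => INR (c j)).
Proof.
  induction L; intros c a eta H.
  - exists 0%Z. simpl. replace (0 - 2 * 0) with 0 by ring. rewrite Rabs_R0. lra.
  - destruct (IHL c a eta (fun j Hj => H j ltac:(lia))) as [Z0 HZ].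
    destruct (H L ltac:(lia)) as [z Hz].
    exists (Z0 + Z.of_nat (c L) * z)%Z. simpl.
    rewrite plus_IZR, mult_IZR, <- INR_IZR_INZ.
    replace (sumn L (fun j => INR (c j) * a j) + INR (c L) * a L - 2 * (IZR Z0 + INR (c L) * IZR z))
      with ((sumn L (fun j => INR (c j) * a j) - 2 * IZR Z0) + INR (c L) * (a L - 2 * IZR z)) by ring.
    eapply Rle_trans; [apply Rabs_triang|].
    rewrite Rabs_mult, (Rabs_right (INR (c L))) by (apply Rle_ge, pos_INR).
    pose proof (pos_INR (c L)).
    assert (INR (c L) * Rabs (a L - 2 * IZR z) <= INR (c L) * eta) by (apply Rmult_le_compat_l; lra).
    lra.
Qed.

Lemma diffn_pow2 : forall j n, diffn j (fun k => 2 ^ k) n = 2 ^ n.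
Proof. induction j; intros n; simpl; [reflexivity|]. rewrite !IHj. simpl. ring. Qed.

Lemma binom_sum : forall n, sumn (S n) (fun j => INR (binom n j)) = 2 ^ n.
Proof.
  intros n. rewrite (newton n (fun k => 2 ^ k)).
  apply sumn_ext. intros j Hj. rewrite diffn_pow2. simpl. ring.
Qed.

Lemma diffn_lin : forall j (f g : nat -> R) (w : R) n,
  diffn j (fun k => w * f k - g k) n = w * diffn j f n - diffn j g n.
Proof. induction j; intros; simpl; [reflexivity|]. rewrite !IHj. ring. Qed.

Lemma lookup : forall (M : nat) (tau : nat -> R) eta,
  (forall n, (n < M)%nat -> 0 <= tau n <= 1) -> 0 < eta ->
  exists P w, INR M + 1 < P /\ 0 <= w /\
    forall n, (n < M)%nat -> Rabs (sigma1 (w / (P - INR n)) - tau n) < eta.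
Proof.
  intros M tau eta Htau Heta.
  set (e0 := Rmin eta 1 / 2).
  assert (He0 : 0 < e0 < eta /\ e0 <= 1/2).
  { unfold e0, Rmin; destruct Rle_dec; split; try split; lra. }
  assert (H2M : 0 < 2 ^ M) by (apply pow_lt; lra).
  assert (H2M1 : 1 <= 2 ^ M) by (apply pow_R1_Rle; lra).
  set (et := e0 / 2 ^ M).
  assert (Het : 0 < et <= 1).
  { unfold et; split; [apply Rdiv_lt_0_compat; lra|].
    apply Rmult_le_reg_r with (2 ^ M); [lra|]. unfold Rdiv; rewrite Rmult_assoc, Rinv_l by lra. lra. }
  set (P := 2 * INR M + 3 + 4 * (INR M + 1) / et).
  assert (HP4 : 0 <= 4 * (INR M + 1) / et) by (apply Rlt_le, Rdiv_lt_0_compat; [pose proof (pos_INR M)|]; lra).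
  pose proof (pos_INR M) as HM0.
  assert (HPbig : 2 * INR M + 3 <= P) by (unfold P; lra).
  set (h := fun k : nat => / (P - INR k)).
  set (D := fun j => diffn j h 0).
  assert (HD : forall j, (j <= M)%nat -> D j = INR (fact j) / Pr j P).
  { intros j Hj. unfold D, h. rewrite diffn_code.
    - simpl INR. rewrite Rminus_0_r. reflexivity.
    - rewrite Nat.add_0_l. apply le_INR in Hj. lra. }
  assert (HDpos : forall j, (j <= M)%nat -> 0 < D j).
  { intros j Hj. rewrite HD by exact Hj. apply Rdiv_lt_0_compat.
    - apply lt_0_INR, lt_O_fact.
    - apply Pr_pos. apply le_INR in Hj. lra. }
  destruct (nested M D (fun j => diffn j tau 0) et Het HDpos) as [w [Hw Hz]].
  { intros j Hj. rewrite !HD by lia.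
    assert (Hj' : INR (S j) <= INR M) by (apply le_INR; lia).
    assert (Ppos : 0 < Pr j P) by (apply Pr_pos; rewrite S_INR in Hj'; lra).
    change (Pr (S j) P) with (Pr j P * (P - INR (S j))).
    change (fact (S j)) with ((S j) * fact j)%nat. rewrite mult_INR.
    pose proof (lt_0_INR _ (lt_O_fact j)) as Hf.
    assert (HPj : 0 < P - INR (S j)) by lra.
    assert (Key : 4 * INR (S j) <= et * (P - INR (S j))).
    { assert (et * (P - INR (S j)) >= et * (4 * (INR M + 1) / et)).
      { apply Rle_ge, Rmult_le_compat_l; [lra|]. unfold P. lra. }
      replace (et * (4 * (INR M + 1) / et)) with (4 * (INR M + 1)) in H by (field; lra).
      rewrite S_INR in *. lra. }
    unfold Rdiv. rewrite Rinv_mult.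
    replace (4 * (INR (S j) * INR (fact j) * (/ Pr j P * / (P - INR (S j)))))
      with ((4 * INR (S j)) * / (P - INR (S j)) * (INR (fact j) * / Pr j P)) by ring.
    replace (et * (INR (fact j) * / Pr j P)) with (et * (P - INR (S j)) * / (P - INR (S j)) * (INR (fact j) * / Pr j P)) by (field; lra).
    apply Rmult_le_compat_r.
    - apply Rlt_le, Rmult_lt_0_compat; [lra| apply Rinv_0_lt_compat; lra].
    - apply Rmult_le_compat_r; [apply Rlt_le, Rinv_0_lt_compat; lra| exact Key]. }
  exists P, w. split; [unfold P; lra|]. split; [exact Hw|].
  intros n Hn.
  assert (Hnewt : w / (P - INR n) - tau n = sumn (S n) (fun j => INR (binom n j) * (w * D j - diffn j tau 0))).
  { pose proof (newton n (fun k => w * h k - tau k)) as HN. cbv beta in HN.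
    replace (w / (P - INR n) - tau n) with (w * h n - tau n) by (unfold h; unfold Rdiv; ring).
    rewrite HN. apply sumn_ext. intros j Hj. rewrite diffn_lin. reflexivity. }
  destruct (combine_int (S n) (binom n) (fun j => w * D j - diffn j tau 0) et) as [Z0 HZ0].
  { intros j Hj. destruct (Hz j ltac:(lia)) as [z Hz']. exists z.
    replace (w * D j - diffn j tau 0 - 2 * IZR z) with (w * D j - diffn j tau 0 - 2 * IZR z) by ring. exact Hz'. }
  rewrite <- Hnewt, binom_sum in HZ0.
  assert (Hb : et * 2 ^ n <= e0).
  { unfold et. assert (2 ^ n <= 2 ^ M) by (apply Rle_pow; [lra| lia]).
    apply Rle_trans with (e0 / 2 ^ M * 2 ^ M); [apply Rmult_le_compat_l; [apply Rlt_le, Rdiv_lt_0_compat; lra|exact H]|].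
    right; field; lra. }
  set (err := w / (P - INR n) - tau n - 2 * IZR Z0) in *.
  replace (w / (P - INR n)) with (tau n + err + 2 * IZR Z0) by (unfold err; ring).
  rewrite sigma1_per.
  rewrite <- (sigma1_id (tau n)) at 2 by (apply Htau; exact Hn).
  eapply Rle_lt_trans; [apply sigma1_Lip|].
  replace (tau n + err - tau n) with err by ring. lra.
Qed.

Section UC.
Variables (d : nat) (a b : R) (f : (nat -> R) -> R) (eps : R).

Definition in_box (lo hi : nat -> R) (x : nat -> R) := forall i, (i < d)%nat -> lo i <= x i <= hi i.

Definition Bad (lo hi : nat -> R) := forall delta, delta > 0 -> exists x y,
  in_cube d a b x /\ in_cube d a b y /\ in_box lo hi x /\
  (forall i, (i < d)%nat -> Rabs (x i - y i) < delta) /\ eps <= Rabs (f x - f y).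

Definition upd (g : nat -> R) (c : nat) (v : R) : nat -> R := fun i => if Nat.eqb i c then v else g i.

Lemma bad_split : forall lo hi c v, Bad lo hi ->
  Bad lo (upd hi c v) \/ Bad (upd lo c v) hi.
Proof.
  intros lo hi c v HB. destruct (classic (Bad lo (upd hi c v))) as [H|H]; [left; exact H|right].
  unfold Bad in H. apply not_all_ex_not in H. destruct H as [d1 H].
  apply imply_to_and in H. destruct H as [Hd1 H].
  intros delta Hdelta.
  destruct (HB (Rmin delta d1)) as [x [y [Hx [Hy [Hbox [Hxy Hf]]]]]].
  { unfold Rmin; destruct Rle_dec; lra. }
  destruct (Rle_dec (x c) v) as [Hc|Hc].
  - exfalso. apply H. exists x, y. split; [exact Hx|split; [exact Hy| split; [|split; [|exact Hf]]]].
    + intros i Hi. unfold upd. destruct (Nat.eqb_spec i c); [subst; split; [apply Hbox; auto| auto]|]. apply Hbox; auto.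
    + intros i Hi. apply Rlt_le_trans with (Rmin delta d1); [apply Hxy; auto|apply Rmin_r].
  - exists x, y. split; [exact Hx|split; [exact Hy| split; [|split; [|exact Hf]]]].
    + intros i Hi. unfold upd. destruct (Nat.eqb_spec i c); [subst; split; [lra| apply Hbox; auto]|]. apply Hbox; auto.
    + intros i Hi. apply Rlt_le_trans with (Rmin delta d1); [apply Hxy; auto|apply Rmin_l].
Qed.

Definition step (c : nat) (p : (nat -> R) * (nat -> R)) : (nat -> R) * (nat -> R) :=
  let lo := fst p in let hi := snd p in let v := (lo c + hi c) / 2 in
  if excluded_middle_informative (Bad lo (upd hi c v)) then (lo, upd hi c v) else (upd lo c v, hi).

Lemma step_bad : forall c p, Bad (fst p) (snd p) -> Bad (fst (step c p)) (snd (step c p)).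
Proof.
  intros c [lo hi] HB. unfold step; simpl.
  destruct excluded_middle_informative as [H|H]; simpl; [exact H|].
  destruct (bad_split lo hi c ((lo c + hi c) / 2) HB); [contradiction|assumption].
Qed.

Definition halves (p p' : (nat -> R) * (nat -> R)) (i : nat) :=
  (fst p' i = fst p i /\ snd p' i = (fst p i + snd p i) / 2) \/
  (fst p' i = (fst p i + snd p i) / 2 /\ snd p' i = snd p i).

Lemma step_prop : forall c p i, (i = c -> halves p (step c p) i) /\ (i <> c -> fst (step c p) i = fst p i /\ snd (step c p) i = snd p i).
Proof.
  intros c [lo hi] i. unfold step, halves, upd; simpl.
  destruct excluded_middle_informative; simpl; split; intros Hi.
  - subst. rewrite Nat.eqb_refl. left; split; reflexivity.
  - destruct (Nat.eqb_spec i c); [contradiction|]. split; reflexivity.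
  - subst. rewrite Nat.eqb_refl. right; split; reflexivity.
  - destruct (Nat.eqb_spec i c); [contradiction|]. split; reflexivity.
Qed.

Fixpoint sall (k : nat) (p : (nat -> R) * (nat -> R)) : (nat -> R) * (nat -> R) :=
  match k with O => p | S k' => step k' (sall k' p) end.

Lemma sall_bad : forall k p, Bad (fst p) (snd p) -> Bad (fst (sall k p)) (snd (sall k p)).
Proof. induction k; intros p H; simpl; auto. apply step_bad. auto. Qed.

Lemma sall_prop : forall k p i, ((i < k)%nat -> halves p (sall k p) i) /\
   ((k <= i)%nat -> fst (sall k p) i = fst p i /\ snd (sall k p) i = snd p i).
Proof.
  induction k; intros p i; simpl.
  - split; intros; [lia| split; reflexivity].
  - destruct (IHk p i) as [IH1 IH2].
    destruct (step_prop k (sall k p) i) as [S1 S2].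
    split; intros Hi.
    + destruct (Nat.eq_dec i k) as [->|Hne].
      * destruct (IH2 (le_n k)) as [E1 E2]. specialize (S1 eq_refl).
        unfold halves in *. rewrite E1, E2 in S1. exact S1.
      * destruct (S2 Hne) as [E1 E2]. specialize (IH1 ltac:(lia)).
        unfold halves in *. rewrite E1, E2. exact IH1.
    + destruct (S2 ltac:(lia)) as [E1 E2]. destruct (IH2 ltac:(lia)) as [E3 E4].
      rewrite E1, E2, E3, E4. split; reflexivity.
Qed.

Fixpoint boxn (n : nat) : (nat -> R) * (nat -> R) :=
  match n with O => (fun _ => a, fun _ => b) | S n' => sall d (boxn n') end.

Hypothesis Hab : a < b.

Lemma boxn_prop : forall n i,
  fst (boxn n) i <= fst (boxn (S n)) i /\ fst (boxn (S n)) i <= snd (boxn (S n)) i /\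
  snd (boxn (S n)) i <= snd (boxn n) i /\
  ((i < d)%nat -> snd (boxn n) i - fst (boxn n) i = (b - a) / 2 ^ n) /\
  fst (boxn n) i <= snd (boxn n) i.
Proof.
  induction n; intros i.
  - simpl boxn at 1 3 5 6 7 8. simpl fst; simpl snd.
    destruct (sall_prop d (fun _ => a, fun _ => b) i) as [H1 H2].
    simpl (fst (fun _ => a, fun _ => b)) in *. simpl (snd (fun _ => a, fun _ => b)) in *.
    destruct (Nat.lt_ge_cases i d) as [Hi|Hi].
    + specialize (H1 Hi). unfold halves in H1. simpl in H1. simpl boxn.
      repeat split; try intros; try (destruct H1 as [[-> ->]|[-> ->]]); simpl; try lra.
    + destruct (H2 ltac:(lia)) as [-> ->]. simpl. repeat split; try intros; try lia; lra.
  - destruct (IHn i) as [A1 [A2 [A3 [A4 A5]]]].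
    change (boxn (S (S n))) with (sall d (boxn (S n))).
    destruct (sall_prop d (boxn (S n)) i) as [H1 H2].
    destruct (Nat.lt_ge_cases i d) as [Hi|Hi].
    + specialize (H1 Hi). unfold halves in H1.
      assert (E : snd (boxn (S n)) i - fst (boxn (S n)) i = (b - a) / 2 ^ S n).
      { change (boxn (S n)) with (sall d (boxn n)).
        destruct (sall_prop d (boxn n) i) as [G1 _]. specialize (G1 Hi). unfold halves in G1.
        specialize (A4 Hi). simpl pow.
        replace ((b - a) / (2 * 2 ^ n)) with (((b - a) / 2 ^ n) / 2) by (field; apply pow_nonzero; lra).
        rewrite <- A4. destruct G1 as [[-> ->]|[-> ->]]; field. }
      repeat split; try intros; try (destruct H1 as [[-> ->]|[-> ->]]); try lra.
    + destruct (H2 ltac:(lia)) as [-> ->]. repeat split; try intros; try lia; lra.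
Qed.

Lemma lo_mono : forall n m i, (n <= m)%nat -> fst (boxn n) i <= fst (boxn m) i.
Proof.
  intros n m i H. induction H; [lra|]. destruct (boxn_prop m i) as [A _]. lra.
Qed.

Lemma hi_mono : forall n m i, (n <= m)%nat -> snd (boxn m) i <= snd (boxn n) i.
Proof.
  intros n m i H. induction H; [lra|]. destruct (boxn_prop m i) as [_ [_ [A _]]]. lra.
Qed.

Lemma lo_le_hi : forall n m i, fst (boxn n) i <= snd (boxn m) i.
Proof.
  intros n m i. destruct (Nat.le_gt_cases n m) as [H|H].
  - pose proof (lo_mono n m i H). destruct (boxn_prop m i) as [_ [_ [_ [_ A]]]]. lra.
  - pose proof (hi_mono m n i ltac:(lia)). destruct (boxn_prop n i) as [_ [_ [_ [_ A]]]]. lra.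
Qed.

End UC.

Lemma pow2_big : forall r, exists n, r < 2 ^ n.
Proof.
  intros r. destruct (INR_unbounded r) as [n Hn]. exists n.
  assert (forall n, INR n <= 2 ^ n).
  { induction n0; [simpl; lra|]. rewrite S_INR. simpl pow. assert (1 <= 2 ^ n0) by (apply pow_R1_Rle; lra). lra. }
  specialize (H n). lra.
Qed.

Lemma unif_cont : forall d a b f, a < b -> cont_on_cube d a b f ->
  forall eps, eps > 0 -> exists delta, delta > 0 /\ forall x y, in_cube d a b x -> in_cube d a b y ->
    (forall i, (i < d)%nat -> Rabs (x i - y i) < delta) -> Rabs (f x - f y) < eps.
Proof.
  intros d a b f Hab [_ Hc] eps Heps.
  apply NNPP. intros Hno.
  assert (HB0 : Bad d a b f eps (fun _ => a) (fun _ => b)).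
  { intros delta Hdelta. apply NNPP. intros Hn. apply Hno. exists delta. split; [exact Hdelta|].
    intros x y Hx Hy Hxy. apply Rnot_le_lt. intros Hle. apply Hn. exists x, y.
    split; [exact Hx|split; [exact Hy| split; [|split; [exact Hxy|exact Hle]]]].
    intros i Hi; apply Hx; auto. }
  assert (HBn : forall n, Bad d a b f eps (fst (boxn d a b f eps n)) (snd (boxn d a b f eps n))).
  { induction n; [exact HB0|]. simpl. apply sall_bad. exact IHn. }
  set (lo := fun n i => fst (boxn d a b f eps n) i).
  set (hi := fun n i => snd (boxn d a b f eps n) i).
  assert (Hz : forall i, { z | is_lub (fun r => exists n, r = lo n i) z }).
  { intros i. apply completeness.
    - exists (hi 0%nat i). intros r [n ->]. apply lo_le_hi; exact Hab.
    - exists (lo 0%nat i). exists 0%nat. reflexivity. }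
  set (z := fun i => proj1_sig (Hz i)).
  assert (Hzb : forall n i, lo n i <= z i <= hi n i).
  { intros n i. unfold z. destruct (Hz i) as [zi [Hub Hlub]]. simpl. split.
    - apply Hub. exists n; reflexivity.
    - apply Hlub. intros r [m ->]. apply lo_le_hi; exact Hab. }
  assert (Hzc : in_cube d a b z).
  { intros i Hi. pose proof (Hzb 0%nat i). unfold lo, hi in H. simpl in H. exact H. }
  destruct (Hc z Hzc (eps/2) ltac:(lra)) as [delta [Hdelta Hcont]].
  destruct (pow2_big (2 * (b - a) / delta)) as [n Hn].
  assert (Hw : (b - a) / 2 ^ n < delta / 2).
  { assert (0 < 2 ^ n) by (apply pow_lt; lra).
    apply Rmult_lt_reg_r with (2 ^ n); [lra|].
    replace ((b - a) / 2 ^ n * 2 ^ n) with (b - a) by (field; lra).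
    apply Rmult_lt_reg_l with (2 / delta); [apply Rdiv_lt_0_compat; lra|].
    replace (2 / delta * (b - a)) with (2 * (b - a) / delta) by (field; lra).
    replace (2 / delta * (delta / 2 * 2 ^ n)) with (2 ^ n) by (field; lra). lra. }
  destruct (HBn n (delta / 2) ltac:(lra)) as [x [y [Hx [Hy [Hbox [Hxy Hf]]]]]].
  assert (Hxz : forall i, (i < d)%nat -> Rabs (x i - z i) < delta / 2).
  { intros i Hi. pose proof (Hzb n i). pose proof (Hbox i Hi).
    destruct (boxn_prop d a b f eps Hab n i) as [_ [_ [_ [A4 _]]]]. specialize (A4 Hi).
    unfold lo, hi in *. unfold Rabs; destruct Rcase_abs; lra. }
  assert (H1 : Rabs (f x - f z) < eps / 2).
  { apply Hcont; auto. intros i Hi. specialize (Hxz i Hi). lra. }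
  assert (H2 : Rabs (f y - f z) < eps / 2).
  { apply Hcont; auto. intros i Hi. specialize (Hxz i Hi). specialize (Hxy i Hi).
    replace (y i - z i) with ((x i - z i) - (x i - y i)) by ring.
    eapply Rle_lt_trans; [apply Rabs_triang|]. rewrite Rabs_Ropp. lra. }
  replace (f x - f y) with ((f x - f z) + - (f y - f z)) in Hf by ring.
  pose proof (Rabs_triang (f x - f z) (- (f y - f z))). rewrite Rabs_Ropp in H. lra.
Qed.

Lemma bounded_f : forall d a b f, a < b -> cont_on_cube d a b f ->
  exists Mf, 0 < Mf /\ forall x, in_cube d a b x -> Rabs (f x) <= Mf.
Proof.
  intros d a b f Hab Hf.
  destruct (unif_cont d a b f Hab Hf 1 ltac:(lra)) as [d1 [Hd1 Hu]].
  destruct (INR_unbounded ((b - a) / d1)) as [K HK].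
  assert (HK0 : (0 < K)%nat).
  { destruct K; [|lia]. simpl in HK. assert (0 < (b - a) / d1) by (apply Rdiv_lt_0_compat; lra). lra. }
  assert (HKpos : 0 < INR K) by (apply lt_0_INR; lia).
  set (x0 := fun _ : nat => a).
  exists (Rabs (f x0) + INR K + 1). split; [pose proof (Rabs_pos (f x0)); lra|].
  intros x Hx.
  set (p := fun (s : nat) (i : nat) => a + INR s / INR K * (x i - a)).
  assert (Hp : forall s, (s <= K)%nat -> in_cube d a b (p s)).
  { intros s Hs i Hi. specialize (Hx i Hi). unfold p.
    assert (0 <= INR s / INR K <= 1).
    { split; [apply Rmult_le_pos; [apply pos_INR| left; apply Rinv_0_lt_compat; lra]|].
      apply Rmult_le_reg_r with (INR K); [lra|]. replace (INR s / INR K * INR K) with (INR s) by (field; lra).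
      apply le_INR in Hs. lra. }
    split; nra. }
  assert (Hstep : forall s, (s <= K)%nat -> Rabs (f (p s) - f x0) <= INR s).
  { induction s; intros Hs.
    - replace (f (p 0%nat)) with (f x0).
      + rewrite Rminus_diag, Rabs_R0; simpl; lra.
      + destruct Hf as [Hdep _]. apply Hdep. intros i Hi. unfold p, x0. simpl. unfold Rdiv. ring.
    - specialize (IHs ltac:(lia)).
      assert (Hs1 : Rabs (f (p (S s)) - f (p s)) < 1).
      { apply Hu; [apply Hp; lia| apply Hp; lia|].
        intros i Hi. unfold p. rewrite S_INR.
        replace (a + (INR s + 1) / INR K * (x i - a) - (a + INR s / INR K * (x i - a))) with ((x i - a) / INR K) by (field; lra).
        specialize (Hx i Hi).
        rewrite Rabs_right by (apply Rle_ge, Rmult_le_pos; [lra| left; apply Rinv_0_lt_compat; lra]).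
        apply Rle_lt_trans with ((b - a) / INR K).
        { apply Rmult_le_compat_r; [left; apply Rinv_0_lt_compat; lra| lra]. }
        apply Rmult_lt_reg_r with (INR K); [lra|]. replace ((b - a) / INR K * INR K) with (b - a) by (field; lra).
        apply Rmult_lt_reg_l with (/ d1); [apply Rinv_0_lt_compat; lra|].
        replace (/ d1 * (b - a)) with ((b - a) / d1) by (unfold Rdiv; ring).
        replace (/ d1 * (d1 * INR K)) with (INR K) by (field; lra). lra. }
      rewrite S_INR. replace (f (p (S s)) - f x0) with ((f (p (S s)) - f (p s)) + (f (p s) - f x0)) by ring.
      eapply Rle_trans; [apply Rabs_triang|]. lra. }
  assert (E : f (p K) = f x).
  { destruct Hf as [Hdep _]. apply Hdep. intros i Hi. unfold p. field. lra. }
  specialize (Hstep K (le_n K)). rewrite E in Hstep.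
  replace (f x) with ((f x - f x0) + f x0) by ring.
  eapply Rle_trans; [apply Rabs_triang|]. lra.
Qed.

Lemma sigma1_even : forall (q : Z) y, 0 <= y <= 1 -> sigma1 (2 * IZR q + y) = y.
Proof. intros q y Hy. rewrite Rplus_comm, sigma1_per. apply sigma1_id; lra. Qed.

Lemma sigma1_odd : forall (q : Z) r, 0 <= r <= 1 -> sigma1 (2 * IZR q + 1 + r) = 1 - r.
Proof.
  intros q r Hr. replace (2 * IZR q + 1 + r) with ((1 + r) + 2 * IZR q) by ring.
  rewrite sigma1_per. apply sigma1_fold; lra.
Qed.

Lemma quant_exact : forall u dl (k : Z), 0 < dl <= 1/4 -> dl <= u ->
  IZR k + dl <= u <= IZR k + 1 - dl ->
  sigma (sigma u + (sigma (u - dl) - sigma (u + dl) + 2 * dl) / (4 * dl)) = u - IZR k.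
Proof.
  intros u dl k Hdl Hu Hk.
  rewrite !(sigma_pos u), (sigma_pos (u - dl)), (sigma_pos (u + dl)) by lra.
  destruct (Z.Even_or_Odd k) as [[q Hq]|[q Hq]]; subst k.
  - rewrite mult_IZR in Hk. simpl (IZR 2) in Hk.
    set (r := u - 2 * IZR q).
    replace u with (2 * IZR q + r) by (unfold r; ring).
    replace (2 * IZR q + r - dl) with (2 * IZR q + (r - dl)) by ring.
    replace (2 * IZR q + r + dl) with (2 * IZR q + (r + dl)) by ring.
    rewrite !sigma1_even by (unfold r; lra).
    replace (r + (r - dl - (r + dl) + 2 * dl) / (4 * dl)) with r by (field; lra).
    rewrite sigma_pos by (unfold r; lra). rewrite sigma1_id by (unfold r; lra).
    rewrite mult_IZR. simpl (IZR 2). ring.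
  - rewrite plus_IZR, mult_IZR in Hk. simpl (IZR 2) in Hk.
    set (r := u - 2 * IZR q - 1).
    replace u with (2 * IZR q + 1 + r) by (unfold r; ring).
    replace (2 * IZR q + 1 + r - dl) with (2 * IZR q + 1 + (r - dl)) by ring.
    replace (2 * IZR q + 1 + r + dl) with (2 * IZR q + 1 + (r + dl)) by ring.
    rewrite !sigma1_odd by (unfold r; lra).
    replace (1 - r + (1 - (r - dl) - (1 - (r + dl)) + 2 * dl) / (4 * dl)) with (1 + (1 - r)) by (field; lra).
    rewrite sigma_pos by (unfold r; lra). rewrite sigma1_fold by (unfold r; lra).
    rewrite plus_IZR, mult_IZR. simpl (IZR 2). simpl (IZR 1). ring.
Qed.

Lemma sigma1_def : forall y, exists q : Z, sigma1 y = Rabs (y - 2 * IZR q) /\ -1 <= y - 2 * IZR q < 1.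
Proof.
  intros y. exists (Int_part ((y + 1) / 2)). split; [reflexivity|].
  destruct (base_Int_part ((y+1)/2)). lra.
Qed.

Lemma gate_good : forall u dl, 0 < dl -> 2 * dl < sigma1 (2 * u) ->
  IZR (Int_part u) + dl <= u <= IZR (Int_part u) + 1 - dl.
Proof.
  intros u dl Hdl H. destruct (sigma1_def (2 * u)) as [q [E Hq]]. rewrite E in H.
  destruct (Rle_lt_dec 0 (2 * u - 2 * IZR q)) as [Hs|Hs].
  - rewrite Rabs_right in H by lra.
    rewrite (Int_part_unique u q) by lra. lra.
  - rewrite Rabs_left in H by lra.
    rewrite (Int_part_unique u (q - 1)) by (rewrite minus_IZR; simpl; lra).
    rewrite minus_IZR; simpl. lra.
Qed.

Lemma spoil : forall u c, sigma1 (2 * u) < c -> exists q : Z, Rabs (u - IZR q) < c / 2.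
Proof.
  intros u c H. destruct (sigma1_def (2 * u)) as [q [E Hq]]. rewrite E in H. exists q.
  replace (2 * u - 2 * IZR q) with (2 * (u - IZR q)) in H by ring.
  rewrite Rabs_mult, Rabs_right in H by lra. lra.
Qed.

Lemma sigma1_comp : forall y, sigma1 y + sigma1 (y + 1) = 1.
Proof.
  intros y. destruct (sigma1_decomp y) as [q [s [Hs ->]]].
  destruct (Rlt_le_dec s 0) as [H|H].
  - rewrite sigma1_rep by lra. rewrite Rabs_left by lra.
    replace (2 * IZR q + s + 1) with (2 * IZR q + (s + 1)) by ring.
    rewrite sigma1_rep by lra. rewrite Rabs_right by lra. ring.
  - rewrite sigma1_rep by lra. rewrite Rabs_right by lra.
    replace (2 * IZR q + s + 1) with (2 * IZR (q + 1) + (s - 1)) by (rewrite plus_IZR; simpl; ring).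
    rewrite sigma1_rep by lra. rewrite Rabs_left by lra. ring.
Qed.

Lemma Int_part_ge : forall r (z : Z), IZR z <= r -> (z <= Int_part r)%Z.
Proof.
  intros r z H. destruct (base_Int_part r) as [H1 H2].
  destruct (Z.le_gt_cases z (Int_part r)) as [Hz|Hz]; [exact Hz|].
  apply Z.le_succ_l in Hz. apply IZR_le in Hz. rewrite succ_IZR in Hz. lra.
Qed.

Lemma Int_part_le : forall r (z : Z), r < IZR z + 1 -> (Int_part r <= z)%Z.
Proof.
  intros r z H. destruct (base_Int_part r) as [H1 H2].
  apply Z.lt_succ_r. apply lt_IZR. rewrite succ_IZR. lra.
Qed.

Lemma pigeon : forall d m (Bad : nat -> nat -> Prop), (d < m)%nat ->
  (forall l g g', (l < d)%nat -> (g < m)%nat -> (g' < m)%nat -> Bad l g -> Bad l g' -> g = g') ->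
  exists g, (g < m)%nat /\ forall l, (l < d)%nat -> ~ Bad l g.
Proof.
  induction d; intros m Bad Hdm Huniq.
  - exists 0%nat. split; [lia|]. intros; lia.
  - destruct (classic (exists g0, (g0 < m)%nat /\ Bad d g0)) as [[g0 [Hg0 HB0]]|Hno].
    + set (rho := fun j => if Nat.ltb j g0 then j else S j).
      destruct (IHd (m - 1)%nat (fun l j => Bad l (rho j))) as [j [Hj Hav]].
      * lia.
      * intros l g g' Hl Hg Hg' H1 H2.
        assert (E : rho g = rho g') by (apply (Huniq l); auto; unfold rho; destruct (Nat.ltb_spec g g0); destruct (Nat.ltb_spec g' g0); lia).
        unfold rho in E. destruct (Nat.ltb_spec g g0); destruct (Nat.ltb_spec g' g0); lia.
      * exists (rho j). split; [unfold rho; destruct (Nat.ltb_spec j g0); lia|].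
        intros l Hl. destruct (Nat.eq_dec l d) as [->|Hne].
        -- intros HB. assert (rho j = g0) by (apply (Huniq d); auto; unfold rho; destruct (Nat.ltb_spec j g0); lia).
           unfold rho in H. destruct (Nat.ltb_spec j g0); lia.
        -- apply Hav. lia.
    + destruct (IHd m Bad ltac:(lia)) as [g [Hg Hav]].
      * intros l g g0 Hl Hg Hg0 H1 H2. apply (Huniq l g g0); auto; lia.
      * exists g. split; auto. intros l Hl. destruct (Nat.eq_dec l d) as [->|Hne].
        -- intros HB. apply Hno. exists g; auto.
        -- apply Hav. lia.
Qed.

Fixpoint nsum (n : nat) (f : nat -> nat) : nat :=
  match n with O => O | S n' => (nsum n' f + f n')%nat end.

Lemma INR_nsum : forall n f, INR (nsum n f) = sumn n (fun l => INR (f l)).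
Proof. induction n; intros f; simpl; [reflexivity|]. rewrite plus_INR, IHn. reflexivity. Qed.

Lemma digits_lt : forall n (B : nat) (c : nat -> nat), (0 < B)%nat -> (forall l, (l < n)%nat -> (c l < B)%nat) ->
  (nsum n (fun l => (B ^ l * c l)%nat) < B ^ n)%nat.
Proof.
  induction n; intros B c HB Hc; simpl; [lia|].
  specialize (IHn B c HB (fun l Hl => Hc l ltac:(lia))).
  specialize (Hc n ltac:(lia)).
  assert (B ^ n * c n <= B ^ n * (B - 1))%nat by (apply Nat.mul_le_mono_l; lia).
  assert (B ^ n * (B - 1) + B ^ n = B * B ^ n)%nat.
  { destruct B; [lia|]. simpl. rewrite Nat.sub_0_r. ring. }
  lia.
Qed.

Lemma digits_unique : forall n (B : nat) (c c' : nat -> nat), (0 < B)%nat ->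
  (forall l, (l < n)%nat -> (c l < B)%nat) -> (forall l, (l < n)%nat -> (c' l < B)%nat) ->
  nsum n (fun l => (B ^ l * c l)%nat) = nsum n (fun l => (B ^ l * c' l)%nat) ->
  forall l, (l < n)%nat -> c l = c' l.
Proof.
  induction n; intros B c c' HB Hc Hc' E l Hl; [lia|].
  simpl in E.
  pose proof (digits_lt n B c HB (fun l Hl => Hc l ltac:(lia))) as L1.
  pose proof (digits_lt n B c' HB (fun l Hl => Hc' l ltac:(lia))) as L2.
  assert (HBn : (B ^ n <> 0)%nat) by (apply Nat.pow_nonzero; lia).
  assert (Ecn : c n = c' n).
  { assert (E1 : ((c n * B ^ n + nsum n (fun l => (B ^ l * c l)%nat)) / B ^ n = c n)%nat).
    { rewrite Nat.div_add_l by exact HBn. rewrite Nat.div_small by exact L1. lia. }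
    assert (E2 : ((c' n * B ^ n + nsum n (fun l => (B ^ l * c' l)%nat)) / B ^ n = c' n)%nat).
    { rewrite Nat.div_add_l by exact HBn. rewrite Nat.div_small by exact L2. lia. }
    rewrite <- E1, <- E2. f_equal. lia. }
  destruct (Nat.eq_dec l n) as [->|Hne]; [exact Ecn|].
  apply (IHn B c c' HB); try (intros; apply Hc || apply Hc'; lia); try lia.
Qed.

Lemma sumn_ge_one : forall n f j, (j < n)%nat -> (forall k, (k < n)%nat -> 0 <= f k) -> f j <= sumn n f.
Proof.
  induction n; intros f j Hj Hf; [lia|]. simpl.
  destruct (Nat.eq_dec j n) as [->|Hne].
  - pose proof (sumn_nonneg n f (fun k Hk => Hf k ltac:(lia))). lra.
  - pose proof (IHn f j ltac:(lia) (fun k Hk => Hf k ltac:(lia))). pose proof (Hf n ltac:(lia)). lra.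
Qed.

Lemma sumn_le_const : forall n f c, (forall k, (k < n)%nat -> f k <= c) -> sumn n f <= INR n * c.
Proof.
  induction n; intros f c H; simpl; [lra|].
  pose proof (IHn f c (fun k Hk => H k ltac:(lia))). pose proof (H n ltac:(lia)).
  destruct n; simpl in *; lra.
Qed.

Definition dlt (j a : nat) (al : R) : R := if Nat.eqb j a then al else 0.

Lemma sumN_add : forall n f g (v : nat -> R),
  sumn n (fun j => (f j + g j) * v j) = sumn n (fun j => f j * v j) + sumn n (fun j => g j * v j).
Proof. intros. rewrite <- sumn_plus. apply sumn_ext. intros; ring. Qed.

Lemma sumN_dlt : forall n a al (v : nat -> R), (a < n)%nat -> sumn n (fun j => dlt j a al * v j) = al * v a.
Proof. intros. unfold dlt. apply sumn_delta. exact H. Qed.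

Lemma sumN_sum : forall n k (F : nat -> nat -> R) (v : nat -> R),
  sumn n (fun j => sumn k (fun l => F l j) * v j) = sumn k (fun l => sumn n (fun j => F l j * v j)).
Proof.
  intros. rewrite <- sumn_swap. apply sumn_ext. intros j Hj.
  rewrite Rmult_comm, <- sumn_scal. apply sumn_ext. intros; ring.
Qed.

Section Net.
Variables (d K K2 : nat) (a b lo hi : R) (Pm wm P2 w2 : nat -> R).

Definition NN := (36 * d * (2 * d + 1))%nat.
Definition ix (t l g : nat) : nat := (t + 5 * (l + d * g))%nat.
Definition dt (i : nat) := (i mod 5)%nat.
Definition dl (i : nat) := ((i / 5) mod d)%nat.
Definition dg (i : nat) := ((i / 5) / d)%nat.

Hypothesis Hd : (0 < d)%nat.

Lemma dt_ix : forall t l g, (t < 5)%nat -> dt (ix t l g) = t.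
Proof.
  intros. unfold dt, ix. replace (t + 5 * (l + d * g))%nat with (t + (l + d * g) * 5)%nat by lia.
  rewrite Nat.Div0.mod_add. apply Nat.mod_small; lia.
Qed.
Lemma d5_ix : forall t l g, (t < 5)%nat -> ((ix t l g) / 5 = l + d * g)%nat.
Proof.
  intros. unfold ix. replace (t + 5 * (l + d * g))%nat with (t + (l + d * g) * 5)%nat by lia.
  rewrite Nat.div_add by lia. rewrite Nat.div_small by lia. lia.
Qed.
Lemma dl_ix : forall t l g, (t < 5)%nat -> (l < d)%nat -> dl (ix t l g) = l.
Proof.
  intros. unfold dl. rewrite d5_ix by lia. replace (l + d * g)%nat with (l + g * d)%nat by lia.
  rewrite Nat.Div0.mod_add. apply Nat.mod_small; lia.
Qed.
Lemma dg_ix : forall t l g, (t < 5)%nat -> (l < d)%nat -> dg (ix t l g) = g.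
Proof.
  intros. unfold dg. rewrite d5_ix by lia. replace (l + d * g)%nat with (l + g * d)%nat by lia.
  rewrite Nat.div_add by lia. rewrite Nat.div_small by lia. lia.
Qed.
Lemma ix_lt : forall t l g, (t < 5)%nat -> (l < d)%nat -> (g < S d)%nat -> (ix t l g < NN)%nat.
Proof.
  intros. unfold ix, NN.
  assert (l + d * g <= d - 1 + d * d)%nat by nia. nia.
Qed.

Definition mR := INR (S d).
Definition dl1 := / (4 * mR).
Definition dl2 := / 8.
Definition Zg := 2 * mR + 2.
Definition ZG := INR d + 2.
Definition BR := INR (S K).

Definition c0base (g : nat) := - INR K * a / (b - a) + INR g / mR + 2.
Definition W0 (i j : nat) : R :=
  if Nat.ltb (dg i) (S d) then
    if Nat.eqb j (dl i) then
      match dt i with 0 | 1 | 2 => INR K / (b - a) | 3 => 2 * INR K / (b - a) | 4 => / (b - a) | _ => 0 end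
    else 0
  else 0.
Definition c0 (i : nat) : R :=
  if Nat.ltb (dg i) (S d) then
    match dt i with
    | 0 => c0base (dg i) | 1 => c0base (dg i) - dl1 | 2 => c0base (dg i) + dl1
    | 3 => 2 * c0base (dg i) | 4 => - a / (b - a) | _ => 0 end
  else 0.

Definition W1 (i j : nat) : R :=
  let g := dg i in let l := dl i in
  if Nat.ltb g (S d) then
    match dt i with
    | 0 => dlt j (ix 0 l g) 1 + dlt j (ix 1 l g) (/ (4 * dl1)) + dlt j (ix 2 l g) (- / (4 * dl1))
    | 1 | 2 => dlt j (ix 3 l g) (2 * mR / Zg)
    | 4 => dlt j (ix 4 l g) 1
    | _ => 0 end
  else 0.
Definition c1 (i : nat) : R :=
  if Nat.ltb (dg i) (S d) then
    match dt i with 0 => 1/2 | 1 => - 1 / Zg + 2 | 2 => - 2 / Zg + 2 | _ => 0 end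
  else 0.

Definition W2 (i j : nat) : R :=
  let g := dg i in
  if Nat.ltb g (S d) then if Nat.eqb (dl i) 0 then
    match dt i with
    | 0 => sumn d (fun l => dlt j (ix 4 l g) (BR ^ l * INR K) + dlt j (ix 0 l g) (- BR ^ l))
    | 1 | 2 => sumn d (fun l => dlt j (ix 1 l g) (Zg / (2 * ZG)) + dlt j (ix 2 l g) (- Zg / (2 * ZG)))
    | _ => 0 end
  else 0 else 0.
Definition c2 (i : nat) : R :=
  let g := dg i in
  if Nat.ltb g (S d) then if Nat.eqb (dl i) 0 then
    match dt i with
    | 0 => sumn d (fun l => BR ^ l * (INR g / mR)) - Pm g + 1
    | 1 => (INR d / 2 - (INR d - 1)) / ZG + 2
    | 2 => (INR d / 2 - (INR d - 1) - 1) / ZG + 2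
    | _ => 0 end
  else 0 else 0.

Definition W3 (i j : nat) : R :=
  let g := dg i in
  if Nat.ltb g (S d) then if Nat.eqb (dl i) 0 then
    match dt i with
    | 0 => dlt j (ix 0 0 g) (wm g)
    | 1 => dlt j (ix 1 0 g) (ZG / 2) + dlt j (ix 2 0 g) (- ZG / 2)
    | _ => 0 end
  else 0 else 0.
Definition c3 (i : nat) : R :=
  let g := dg i in
  if Nat.ltb g (S d) then if Nat.eqb (dl i) 0 then
    match dt i with 0 => wm g | 1 => 1/2 | _ => 0 end
  else 0 else 0.

Definition W4 (i j : nat) : R :=
  let g := dg i in
  if Nat.ltb g (S d) then if Nat.eqb (dl i) 0 then
    match dt i with
    | 0 | 1 => dlt j (ix 0 0 g) (1/3) + dlt j (ix 1 0 g) (1/3)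
    | _ => 0 end
  else 0 else 0.
Definition c4 (i : nat) : R :=
  let g := dg i in
  if Nat.ltb g (S d) then if Nat.eqb (dl i) 0 then
    match dt i with 0 => - 1 / 3 + 2 | 1 => - 2 / 3 + 2 | _ => 0 end
  else 0 else 0.

Definition Wsum (al : R) (j : nat) : R :=
  sumn (S d) (fun g => dlt j (ix 0 0 g) (3 / 2 * al) + dlt j (ix 1 0 g) (- 3 / 2 * al)).
Definition W5 (i j : nat) : R :=
  let r := dg i in
  if Nat.ltb r 2 then if Nat.eqb (dl i) 0 then
    match dt i with
    | 0 | 1 | 2 => Wsum (INR K2) j
    | 3 => Wsum (2 * INR K2) j
    | 4 => Wsum (/ mR) j
    | _ => 0 end
  else 0 else 0.
Definition c2base (r : nat) := INR K2 * mR / 2 + INR r / 2 + 2.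
Definition c5 (i : nat) : R :=
  let r := dg i in
  if Nat.ltb r 2 then if Nat.eqb (dl i) 0 then
    match dt i with
    | 0 => c2base r | 1 => c2base r - dl2 | 2 => c2base r + dl2 | 3 => 2 * c2base r | 4 => 1 / 2
    | _ => 0 end
  else 0 else 0.

Definition W6 (i j : nat) : R :=
  let r := dg i in
  if Nat.ltb r 2 then if Nat.eqb (dl i) 0 then
    match dt i with
    | 0 => dlt j (ix 0 0 r) 1 + dlt j (ix 1 0 r) (/ (4 * dl2)) + dlt j (ix 2 0 r) (- / (4 * dl2))
    | 1 | 2 => dlt j (ix 3 0 r) (4 / 5)
    | 4 => dlt j (ix 4 0 r) 1
    | _ => 0 end
  else 0 else 0.
Definition c6 (i : nat) : R :=
  let r := dg i in
  if Nat.ltb r 2 then if Nat.eqb (dl i) 0 then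
    match dt i with 0 => 1/2 | 1 => - 1 / 5 + 2 | 2 => - 2 / 5 + 2 | _ => 0 end
  else 0 else 0.

Definition W7 (i j : nat) : R :=
  let r := dg i in
  if Nat.ltb r 2 then if Nat.eqb (dl i) 0 then
    match dt i with
    | 0 => dlt j (ix 4 0 r) (INR K2 * mR) + dlt j (ix 0 0 r) (-1)
    | 1 => dlt j (ix 1 0 r) (5 / 2) + dlt j (ix 2 0 r) (- 5 / 2)
    | _ => 0 end
  else 0 else 0.
Definition c7 (i : nat) : R :=
  let r := dg i in
  if Nat.ltb r 2 then if Nat.eqb (dl i) 0 then
    match dt i with 0 => INR r / 2 - P2 r + 1 | 1 => 1 / 2 | _ => 0 end
  else 0 else 0.

Definition W8 (i j : nat) : R :=
  let r := dg i in
  if Nat.ltb r 2 then if Nat.eqb (dl i) 0 then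
    match dt i with
    | 0 => dlt j (ix 0 0 r) (w2 r)
    | 1 => dlt j (ix 1 0 r) 1
    | _ => 0 end
  else 0 else 0.
Definition c8 (i : nat) : R :=
  let r := dg i in
  if Nat.ltb r 2 then if Nat.eqb (dl i) 0 then
    match dt i with 0 => w2 r | _ => 0 end
  else 0 else 0.

Definition W9 (i j : nat) : R :=
  if Nat.eqb (dg i) 0 then if Nat.eqb (dl i) 0 then
    match dt i with
    | 0 => dlt j (ix 0 0 0) (1/4) + dlt j (ix 1 0 0) (1/4) + dlt j (ix 0 0 1) (-1/4) + dlt j (ix 1 0 1) (-1/4)
    | 1 => dlt j (ix 0 0 0) (1/8) + dlt j (ix 1 0 0) (1/8) + dlt j (ix 0 0 1) (1/8) + dlt j (ix 1 0 1) (1/8)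
    | _ => 0 end
  else 0 else 0.
Definition c9 (i : nat) : R :=
  if Nat.eqb (dg i) 0 then if Nat.eqb (dl i) 0 then
    match dt i with 0 => 2 | 1 => 2 / 8 | _ => 0 end
  else 0 else 0.

Definition W10 (i j : nat) : R :=
  if Nat.eqb (dg i) 0 then if Nat.eqb (dl i) 0 then
    match dt i with
    | 0 => dlt j (ix 0 0 0) (1/2) + dlt j (ix 1 0 0) 1
    | _ => 0 end
  else 0 else 0.
Definition c10 (i : nat) : R := 0.

Definition Ws (k : nat) : nat -> nat -> R :=
  match k with
  | 1 => W1 | 2 => W2 | 3 => W3 | 4 => W4 | 5 => W5 | 6 => W6 | 7 => W7 | 8 => W8 | 9 => W9 | 10 => W10
  | _ => fun _ _ => 0 end.
Definition cs (k : nat) : nat -> R :=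
  match k with
  | 1 => c1 | 2 => c2 | 3 => c3 | 4 => c4 | 5 => c5 | 6 => c6 | 7 => c7 | 8 => c8 | 9 => c9 | 10 => c10
  | _ => fun _ => 0 end.
Definition WL (j : nat) : R := dlt j (ix 0 0 0) (4 * (hi - lo)).
Definition cL : R := lo - 2 * (hi - lo).

Definition h1 (x : nat -> R) : nat -> R := fun i => sigma (affine d W0 c0 x i).
Definition HN (x : nat -> R) (k : nat) : nat -> R := hidden NN k Ws cs (h1 x).


Hypothesis Hab : a < b.

Lemma sumn_const : forall n c, sumn n (fun _ => c) = INR n * c.
Proof. induction n; intros; simpl sumn; [simpl; ring|]. rewrite IHn, S_INR. ring. Qed.

Lemma mR_pos : 0 < mR.
Proof. unfold mR. apply lt_0_INR. lia. Qed.

Lemma H_S : forall x k i, HN x (S k) i = sigma (affine NN (Ws (S k)) (cs (S k)) (HN x k) i).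
Proof. reflexivity. Qed.

Ltac dec := repeat ((rewrite dt_ix by lia) || (rewrite dl_ix by lia) || (rewrite dg_ix by lia)).
Ltac ltbt := repeat match goal with |- context [Nat.ltb ?x ?y] => rewrite (proj2 (Nat.ltb_lt x y)) by lia end.
Ltac ev := unfold affine; cbn [Ws cs];
  unfold W0, c0, W1, c1, W2, c2, W3, c3, W4, c4, W5, c5, W6, c6, W7, c7, W8, c8, W9, c9, W10, c10;
  cbv zeta; dec; ltbt; rewrite ?Nat.eqb_refl; cbv beta iota.
Ltac sums := repeat ((rewrite sumN_add) || (rewrite sumN_dlt by (apply ix_lt; lia))).

Definition tt (x : nat -> R) l := (x l - a) / (b - a).
Definition uu (x : nat -> R) g l := INR K * tt x l + INR g / mR + 2.

Lemma E1 : forall x g l, (g < S d)%nat -> (l < d)%nat ->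
  h1 x (ix 0 l g) = sigma (uu x g l) /\ h1 x (ix 1 l g) = sigma (uu x g l - dl1) /\
  h1 x (ix 2 l g) = sigma (uu x g l + dl1) /\ h1 x (ix 3 l g) = sigma (2 * uu x g l) /\
  h1 x (ix 4 l g) = sigma (tt x l).
Proof.
  intros x g l Hg Hl. pose proof mR_pos.
  unfold h1; repeat split; ev; rewrite sumn_delta by exact Hl; f_equal; unfold uu, tt, c0base; field; lra.
Qed.

Lemma E2 : forall x g l, (g < S d)%nat -> (l < d)%nat ->
  HN x 1 (ix 0 l g) = sigma (h1 x (ix 0 l g) + (h1 x (ix 1 l g) - h1 x (ix 2 l g) + 2 * dl1) / (4 * dl1)) /\
  HN x 1 (ix 1 l g) = sigma ((2 * mR * h1 x (ix 3 l g) - 1) / Zg + 2) /\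
  HN x 1 (ix 2 l g) = sigma ((2 * mR * h1 x (ix 3 l g) - 1 - 1) / Zg + 2) /\
  HN x 1 (ix 4 l g) = sigma (h1 x (ix 4 l g)).
Proof.
  intros x g l Hg Hl. pose proof mR_pos.
  assert (0 < dl1) by (unfold dl1; apply Rinv_0_lt_compat; lra).
  assert (0 < Zg) by (unfold Zg; lra).
  repeat split; rewrite H_S; ev; change (HN x 0) with (h1 x); sums; f_equal; field; lra.
Qed.

Lemma E3 : forall x g, (g < S d)%nat ->
  HN x 2 (ix 0 0 g) = sigma (sumn d (fun l => BR ^ l * (INR K * HN x 1 (ix 4 l g) + INR g / mR - HN x 1 (ix 0 l g))) - (Pm g - 1)) /\
  HN x 2 (ix 1 0 g) = sigma ((sumn d (fun l => (Zg * HN x 1 (ix 1 l g) - Zg * HN x 1 (ix 2 l g) + 1) / 2) - (INR d - 1)) / ZG + 2) /\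
  HN x 2 (ix 2 0 g) = sigma ((sumn d (fun l => (Zg * HN x 1 (ix 1 l g) - Zg * HN x 1 (ix 2 l g) + 1) / 2) - (INR d - 1) - 1) / ZG + 2).
Proof.
  intros x g Hg. pose proof mR_pos.
  assert (0 < ZG) by (unfold ZG; pose proof (pos_INR d); lra).
  repeat split; rewrite H_S; ev; rewrite sumN_sum; f_equal.
  - rewrite (sumn_ext _ _ (fun l => BR ^ l * INR K * HN x 1 (ix 4 l g) + - BR ^ l * HN x 1 (ix 0 l g))).
    2:{ intros l Hl. sums. reflexivity. }
    replace (sumn d (fun l => BR ^ l * (INR K * HN x 1 (ix 4 l g) + INR g / mR - HN x 1 (ix 0 l g))))
      with (sumn d (fun l => BR ^ l * INR K * HN x 1 (ix 4 l g) + - BR ^ l * HN x 1 (ix 0 l g)) + sumn d (fun l => BR ^ l * (INR g / mR))).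
    + ring.
    + rewrite <- sumn_plus. apply sumn_ext. intros; ring.
  - rewrite (sumn_ext _ _ (fun l => Zg / (2 * ZG) * HN x 1 (ix 1 l g) + - Zg / (2 * ZG) * HN x 1 (ix 2 l g))).
    2:{ intros l Hl. sums. reflexivity. }
    replace (sumn d (fun l => (Zg * HN x 1 (ix 1 l g) - Zg * HN x 1 (ix 2 l g) + 1) / 2))
      with (ZG * sumn d (fun l => Zg / (2 * ZG) * HN x 1 (ix 1 l g) + - Zg / (2 * ZG) * HN x 1 (ix 2 l g)) + sumn d (fun _ => 1/2)).
    + rewrite sumn_const. field. lra.
    + rewrite <- sumn_scal, <- sumn_plus. apply sumn_ext. intros; field; lra.
  - rewrite (sumn_ext _ _ (fun l => Zg / (2 * ZG) * HN x 1 (ix 1 l g) + - Zg / (2 * ZG) * HN x 1 (ix 2 l g))).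
    2:{ intros l Hl. sums. reflexivity. }
    replace (sumn d (fun l => (Zg * HN x 1 (ix 1 l g) - Zg * HN x 1 (ix 2 l g) + 1) / 2))
      with (ZG * sumn d (fun l => Zg / (2 * ZG) * HN x 1 (ix 1 l g) + - Zg / (2 * ZG) * HN x 1 (ix 2 l g)) + sumn d (fun _ => 1/2)).
    + rewrite sumn_const. field. lra.
    + rewrite <- sumn_scal, <- sumn_plus. apply sumn_ext. intros; field; lra.
Qed.

Lemma E4 : forall x g, (g < S d)%nat ->
  HN x 3 (ix 0 0 g) = sigma (wm g * (HN x 2 (ix 0 0 g) + 1)) /\
  HN x 3 (ix 1 0 g) = sigma ((ZG * HN x 2 (ix 1 0 g) - ZG * HN x 2 (ix 2 0 g) + 1) / 2).
Proof.
  intros x g Hg. repeat split; rewrite H_S; ev; sums; f_equal; field.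
Qed.

Lemma E5 : forall x g, (g < S d)%nat ->
  HN x 4 (ix 0 0 g) = sigma ((HN x 3 (ix 0 0 g) - 1 + HN x 3 (ix 1 0 g)) / 3 + 2) /\
  HN x 4 (ix 1 0 g) = sigma ((HN x 3 (ix 0 0 g) - 1 + HN x 3 (ix 1 0 g) - 1) / 3 + 2).
Proof.
  intros x g Hg. repeat split; rewrite H_S; ev; sums; f_equal; field.
Qed.

Definition SS (v : nat -> R) := sumn (S d) (fun g => (3 * v (ix 0 0 g) - 3 * v (ix 1 0 g) + 1) / 2).


Lemma Wsum_eval : forall al v, sumn NN (fun j => Wsum al j * v j) = al * (SS v - mR / 2).
Proof.
  intros al v. unfold Wsum. rewrite sumN_sum.
  rewrite (sumn_ext _ _ (fun g => al * ((3 * v (ix 0 0 g) - 3 * v (ix 1 0 g) + 1) / 2 - 1 / 2))).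
  2:{ intros g Hg. sums. field. }
  rewrite sumn_scal, sumn_minus, sumn_const. unfold SS, mR. field.
Qed.

Lemma E6 : forall x r, (r < 2)%nat ->
  HN x 5 (ix 0 0 r) = sigma (INR K2 * SS (HN x 4) + INR r / 2 + 2) /\
  HN x 5 (ix 1 0 r) = sigma (INR K2 * SS (HN x 4) + INR r / 2 + 2 - dl2) /\
  HN x 5 (ix 2 0 r) = sigma (INR K2 * SS (HN x 4) + INR r / 2 + 2 + dl2) /\
  HN x 5 (ix 3 0 r) = sigma (2 * (INR K2 * SS (HN x 4) + INR r / 2 + 2)) /\
  HN x 5 (ix 4 0 r) = sigma (SS (HN x 4) / mR).
Proof.
  intros x r Hr. pose proof mR_pos.
  repeat split; rewrite H_S; ev; rewrite Wsum_eval; f_equal; unfold c2base; field; lra.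
Qed.

Lemma E7 : forall x r, (r < 2)%nat ->
  HN x 6 (ix 0 0 r) = sigma (HN x 5 (ix 0 0 r) + (HN x 5 (ix 1 0 r) - HN x 5 (ix 2 0 r) + 2 * dl2) / (4 * dl2)) /\
  HN x 6 (ix 1 0 r) = sigma ((4 * HN x 5 (ix 3 0 r) - 1) / 5 + 2) /\
  HN x 6 (ix 2 0 r) = sigma ((4 * HN x 5 (ix 3 0 r) - 1 - 1) / 5 + 2) /\
  HN x 6 (ix 4 0 r) = sigma (HN x 5 (ix 4 0 r)).
Proof.
  intros x r Hr. repeat split; rewrite H_S; ev; sums; f_equal; unfold dl2; field.
Qed.

Lemma E8 : forall x r, (r < 2)%nat ->
  HN x 7 (ix 0 0 r) = sigma (INR K2 * (mR * HN x 6 (ix 4 0 r)) + INR r / 2 - HN x 6 (ix 0 0 r) - (P2 r - 1)) /\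
  HN x 7 (ix 1 0 r) = sigma ((5 * HN x 6 (ix 1 0 r) - 5 * HN x 6 (ix 2 0 r) + 1) / 2).
Proof.
  intros x r Hr. repeat split; rewrite H_S; ev; sums; f_equal; field.
Qed.

Lemma E9 : forall x r, (r < 2)%nat ->
  HN x 8 (ix 0 0 r) = sigma (w2 r * (HN x 7 (ix 0 0 r) + 1)) /\
  HN x 8 (ix 1 0 r) = sigma (HN x 7 (ix 1 0 r)).
Proof.
  intros x r Hr. repeat split; rewrite H_S; ev; sums; f_equal; field.
Qed.

Definition yv (v : nat -> R) r := v (ix 0 0 r) - 1 + v (ix 1 0 r).

Lemma E10 : forall x,
  HN x 9 (ix 0 0 0) = sigma ((yv (HN x 8) 0 - yv (HN x 8) 1) / 4 + 2) /\
  HN x 9 (ix 1 0 0) = sigma ((yv (HN x 8) 0 + yv (HN x 8) 1 + 4) / 8).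
Proof.
  intros x. repeat split; rewrite H_S; ev; sums; f_equal; unfold yv; field.
Qed.

Lemma E11 : forall x,
  HN x 10 (ix 0 0 0) = sigma ((HN x 9 (ix 0 0 0) + 2 * HN x 9 (ix 1 0 0)) / 2).
Proof.
  intros x. rewrite H_S; ev; sums; f_equal; unfold c10; field.
Qed.

Lemma Eout : forall x,
  network d NN 11 W0 c0 Ws cs WL cL x = 4 * (hi - lo) * HN x 10 (ix 0 0 0) + (lo - 2 * (hi - lo)).
Proof.
  intros x. unfold network. change (hidden NN (11 - 1) Ws cs (fun i => sigma (affine d W0 c0 x i))) with (HN x 10).
  unfold WL, cL. rewrite sumN_dlt by (apply ix_lt; lia). reflexivity.
Qed.


Lemma mR_ge1 : 1 <= mR.
Proof. unfold mR. rewrite S_INR. pose proof (pos_INR d). lra. Qed.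

Lemma gR_lt : forall g, (g < S d)%nat -> 0 <= INR g / mR < 1.
Proof.
  intros g Hg. pose proof mR_pos. split.
  - apply Rmult_le_pos; [apply pos_INR| left; apply Rinv_0_lt_compat; lra].
  - apply Rmult_lt_reg_r with mR; [lra|]. replace (INR g / mR * mR) with (INR g) by (field; lra).
    unfold mR. rewrite Rmult_1_l. apply lt_INR. exact Hg.
Qed.

Lemma tt_bound : forall x l, in_cube d a b x -> (l < d)%nat -> 0 <= tt x l <= 1.
Proof.
  intros x l Hx Hl. specialize (Hx l Hl). unfold tt. split.
  - apply Rmult_le_pos; [lra| left; apply Rinv_0_lt_compat; lra].
  - apply Rmult_le_reg_r with (b - a); [lra|]. replace ((x l - a) / (b - a) * (b - a)) with (x l - a) by (field; lra). lra.
Qed.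

Lemma uu_bound : forall x g l, in_cube d a b x -> (g < S d)%nat -> (l < d)%nat -> 2 <= uu x g l < INR K + 3.
Proof.
  intros x g l Hx Hg Hl. pose proof (tt_bound x l Hx Hl). pose proof (gR_lt g Hg). pose proof (pos_INR K).
  unfold uu. split; nra.
Qed.

Definition cgl x g l := sigma1 (2 * uu x g l).
Definition gsem x g l := clip01 (2 * mR * cgl x g l - 1).
Definition Gsem x g := clip01 (sumn d (gsem x g) - (INR d - 1)).
Definition kk x g l := Int_part (uu x g l).
Definition idxm x g := nsum d (fun l => (S K ^ l * Z.to_nat (kk x g l - 2))%nat).

Lemma dl1_prop : 0 < dl1 <= 1/4 /\ 2 * dl1 = / (2 * mR).
Proof.
  pose proof mR_ge1. unfold dl1. split; [split|].
  - apply Rinv_0_lt_compat; lra.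
  - apply Rmult_le_reg_r with (4 * mR); [lra|]. rewrite Rinv_l by lra. lra.
  - field; lra.
Qed.

Lemma C1 : forall x g l, in_cube d a b x -> (g < S d)%nat -> (l < d)%nat ->
  HN x 1 (ix 4 l g) = tt x l /\
  gsem x g l = (Zg * HN x 1 (ix 1 l g) - Zg * HN x 1 (ix 2 l g) + 1) / 2 /\
  (0 < gsem x g l -> HN x 1 (ix 0 l g) = uu x g l - IZR (kk x g l)).
Proof.
  intros x g l Hx Hg Hl.
  destruct (E1 x g l Hg Hl) as [A0 [A1 [A2 [A3 A4]]]].
  destruct (E2 x g l Hg Hl) as [B0 [B1 [B2 B4]]].
  pose proof (uu_bound x g l Hx Hg Hl) as Hu. pose proof (tt_bound x l Hx Hl) as Ht.
  pose proof mR_ge1. destruct dl1_prop as [Hdl Hdl2].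
  assert (Hc : 0 <= cgl x g l <= 1) by apply sigma1_bound.
  assert (A3' : h1 x (ix 3 l g) = cgl x g l) by (rewrite A3; apply sigma_pos; lra).
  split; [|split].
  - rewrite B4, A4, !sigma_id; auto. rewrite sigma_id; auto.
  - rewrite B1, B2, A3'. unfold gsem, clip01.
    assert (HZ : 0 < Zg) by (unfold Zg; lra).
    rewrite (sigma_abs (2 * mR * cgl x g l - 1) Zg HZ).
    2:{ unfold Zg. unfold Rabs; destruct Rcase_abs; nra. }
    rewrite (sigma_abs (2 * mR * cgl x g l - 1 - 1) Zg HZ).
    2:{ unfold Zg. unfold Rabs; destruct Rcase_abs; nra. }
    reflexivity.
  - intros Hpos. apply clip01_pos in Hpos.
    assert (Hc2 : 2 * dl1 < sigma1 (2 * uu x g l)).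
    { rewrite Hdl2. fold (cgl x g l). apply Rmult_lt_reg_l with (2 * mR); [lra|].
      rewrite Rinv_r by lra. lra. }
    pose proof (gate_good (uu x g l) dl1 ltac:(lra) Hc2) as Hk.
    rewrite B0, A0, A1, A2. apply quant_exact; [lra|lra|exact Hk].
Qed.

Lemma sumn_le_drop : forall n f j, (j < n)%nat -> (forall k, (k < n)%nat -> f k <= 1) -> f j <= 0 -> sumn n f <= INR n - 1.
Proof.
  induction n; intros f j Hj H1 H0; [lia|]. simpl sumn. rewrite S_INR.
  destruct (Nat.eq_dec j n) as [->|Hne].
  - pose proof (sumn_le_const n f 1 (fun k Hk => H1 k ltac:(lia))). lra.
  - pose proof (IHn f j ltac:(lia) (fun k Hk => H1 k ltac:(lia)) H0). pose proof (H1 n ltac:(lia)). lra.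
Qed.

Lemma Gsem_all : forall x g l, (l < d)%nat -> 0 < Gsem x g -> 0 < gsem x g l.
Proof.
  intros x g l Hl HG. apply clip01_pos in HG.
  destruct (Rlt_le_dec 0 (gsem x g l)) as [H0|H0]; [exact H0|].
  exfalso. pose proof (sumn_le_drop d (gsem x g) l Hl (fun k Hk => proj2 (clip01_bound _)) H0). lra.
Qed.

Lemma Gsem_bound : forall x g, 0 <= Gsem x g <= 1.
Proof. intros; apply clip01_bound. Qed.

Lemma C3 : forall x g, in_cube d a b x -> (g < S d)%nat ->
  HN x 3 (ix 1 0 g) = Gsem x g.
Proof.
  intros x g Hx Hg. destruct (E4 x g Hg) as [_ B1]. destruct (E3 x g Hg) as [_ [A1 A2]].
  rewrite B1, A1, A2.
  rewrite (sumn_ext _ (fun l => (Zg * HN x 1 (ix 1 l g) - Zg * HN x 1 (ix 2 l g) + 1) / 2) (gsem x g)).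
  2:{ intros l Hl. destruct (C1 x g l Hx Hg Hl) as [_ [E _]]. symmetry; exact E. }
  assert (HZ : 0 < ZG) by (unfold ZG; pose proof (pos_INR d); lra).
  assert (Hs : 0 <= sumn d (gsem x g) <= INR d).
  { split; [apply sumn_nonneg; intros; apply clip01_bound|].
    pose proof (sumn_le_const d (gsem x g) 1 (fun k Hk => proj2 (clip01_bound _))). lra. }
  pose proof (pos_INR d).
  rewrite (sigma_abs (sumn d (gsem x g) - (INR d - 1)) ZG HZ).
  2:{ unfold ZG; unfold Rabs; destruct Rcase_abs; lra. }
  rewrite (sigma_abs (sumn d (gsem x g) - (INR d - 1) - 1) ZG HZ).
  2:{ unfold ZG; unfold Rabs; destruct Rcase_abs; lra. }
  fold (clip01 (sumn d (gsem x g) - (INR d - 1))). fold (Gsem x g).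
  apply sigma_id. apply Gsem_bound.
Qed.

Lemma kk_bound : forall x g l, in_cube d a b x -> (g < S d)%nat -> (l < d)%nat ->
  (2 <= kk x g l <= Z.of_nat K + 2)%Z.
Proof.
  intros x g l Hx Hg Hl. pose proof (uu_bound x g l Hx Hg Hl). unfold kk. split.
  - apply Int_part_ge. simpl. lra.
  - apply Int_part_le. rewrite plus_IZR, <- INR_IZR_INZ. simpl. lra.
Qed.

Lemma idxm_lt : forall x g, in_cube d a b x -> (g < S d)%nat -> (idxm x g < S K ^ d)%nat.
Proof.
  intros x g Hx Hg. unfold idxm. apply digits_lt; [lia|].
  intros l Hl. pose proof (kk_bound x g l Hx Hg Hl). lia.
Qed.

Lemma C3code : forall x g, in_cube d a b x -> (g < S d)%nat -> 0 < Gsem x g ->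
  HN x 2 (ix 0 0 g) = sigma (INR (idxm x g) - (Pm g - 1)).
Proof.
  intros x g Hx Hg HG. destruct (E3 x g Hg) as [A0 _]. rewrite A0. f_equal. f_equal.
  unfold idxm. rewrite INR_nsum. apply sumn_ext. intros l Hl.
  destruct (C1 x g l Hx Hg Hl) as [T4 [_ T0]].
  rewrite T4, (T0 (Gsem_all x g l Hl HG)).
  rewrite mult_INR, pow_INR. unfold BR. f_equal.
  pose proof (kk_bound x g l Hx Hg Hl).
  rewrite (INR_IZR_INZ (Z.to_nat _)), Z2Nat.id by lia. rewrite minus_IZR. unfold uu. simpl. ring.
Qed.

Lemma C4 : forall x g, in_cube d a b x -> (g < S d)%nat -> 0 < Gsem x g ->
  INR (S K ^ d) + 1 < Pm g -> 0 <= wm g ->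
  HN x 3 (ix 0 0 g) = sigma1 (wm g / (Pm g - INR (idxm x g))).
Proof.
  intros x g Hx Hg HG HP Hw. destruct (E4 x g Hg) as [B0 _]. rewrite B0, (C3code x g Hx Hg HG).
  pose proof (lt_INR _ _ (idxm_lt x g Hx Hg)) as Hn.
  rewrite (sigma_neg (INR (idxm x g) - (Pm g - 1))) by lra.
  replace (wm g * ((INR (idxm x g) - (Pm g - 1)) / (1 - (INR (idxm x g) - (Pm g - 1))) + 1))
    with (wm g / (Pm g - INR (idxm x g))) by (field; lra).
  apply sigma_pos. apply Rmult_le_pos; [exact Hw| left; apply Rinv_0_lt_compat; lra].
Qed.

Lemma H_bound : forall x k i, Rabs (HN x (S k) i) <= 1.
Proof. intros. rewrite H_S. apply sigma_bound. Qed.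

Lemma C5 : forall x g, in_cube d a b x -> (g < S d)%nat ->
  (3 * HN x 4 (ix 0 0 g) - 3 * HN x 4 (ix 1 0 g) + 1) / 2 = clip01 (HN x 3 (ix 0 0 g) - 1 + Gsem x g).
Proof.
  intros x g Hx Hg. destruct (E5 x g Hg) as [A0 A1]. rewrite A0, A1, (C3 x g Hx Hg).
  pose proof (H_bound x 2 (ix 0 0 g)) as HE. pose proof (Gsem_bound x g).
  assert (HE' : -1 <= HN x 3 (ix 0 0 g) <= 1) by (unfold Rabs in HE; destruct Rcase_abs in HE; lra).
  rewrite (sigma_abs (HN x 3 (ix 0 0 g) - 1 + Gsem x g) 3) by (try lra; unfold Rabs; destruct Rcase_abs; lra).
  rewrite (sigma_abs (HN x 3 (ix 0 0 g) - 1 + Gsem x g - 1) 3) by (try lra; unfold Rabs; destruct Rcase_abs; lra).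
  reflexivity.
Qed.

Definition Sv x := SS (HN x 4).

Lemma Sv_eq : forall x, in_cube d a b x -> Sv x = sumn (S d) (fun g => clip01 (HN x 3 (ix 0 0 g) - 1 + Gsem x g)).
Proof. intros x Hx. unfold Sv, SS. apply sumn_ext. intros g Hg. apply C5; auto. Qed.

Lemma Sv_bound : forall x, in_cube d a b x -> 0 <= Sv x <= mR.
Proof.
  intros x Hx. rewrite Sv_eq by auto. split.
  - apply sumn_nonneg. intros; apply clip01_bound.
  - pose proof (sumn_le_const (S d) (fun g => clip01 (HN x 3 (ix 0 0 g) - 1 + Gsem x g)) 1 (fun k Hk => proj2 (clip01_bound _))).
    unfold mR. lra.
Qed.

Definition u2 x r := INR K2 * Sv x + INR r / 2 + 2.
Definition g2sem x r := clip01 (4 * sigma1 (2 * u2 x r) - 1).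
Definition idx2 x r := Z.to_nat (Int_part (u2 x r) - 2).

Lemma u2_bound : forall x r, in_cube d a b x -> (r < 2)%nat -> 2 <= u2 x r < INR K2 * mR + 3.
Proof.
  intros x r Hx Hr. pose proof (Sv_bound x Hx). pose proof (pos_INR K2).
  assert (0 <= INR r <= 1) by (split; [apply pos_INR|]; replace 1 with (INR 1) by reflexivity; apply le_INR; lia).
  unfold u2. split; nra.
Qed.

Lemma C7 : forall x r, in_cube d a b x -> (r < 2)%nat ->
  HN x 6 (ix 4 0 r) = Sv x / mR /\
  g2sem x r = (5 * HN x 6 (ix 1 0 r) - 5 * HN x 6 (ix 2 0 r) + 1) / 2 /\
  (0 < g2sem x r -> HN x 6 (ix 0 0 r) = u2 x r - IZR (Int_part (u2 x r))).
Proof.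
  intros x r Hx Hr.
  destruct (E6 x r Hr) as [A0 [A1 [A2 [A3 A4]]]]. destruct (E7 x r Hr) as [B0 [B1 [B2 B4]]].
  pose proof (u2_bound x r Hx Hr) as Hu. pose proof (Sv_bound x Hx). pose proof mR_ge1.
  fold (Sv x) in *. fold (u2 x r) in *.
  assert (Hdl2 : dl2 = 1/8) by (unfold dl2; field).
  assert (Hs : 0 <= Sv x / mR <= 1).
  { split; [apply Rmult_le_pos; [lra| left; apply Rinv_0_lt_compat; lra]|].
    apply Rmult_le_reg_r with mR; [lra|]. replace (Sv x / mR * mR) with (Sv x) by (field; lra). lra. }
  assert (Hc : 0 <= sigma1 (2 * u2 x r) <= 1) by apply sigma1_bound.
  assert (A3' : HN x 5 (ix 3 0 r) = sigma1 (2 * u2 x r)) by (rewrite A3; apply sigma_pos; lra).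
  split; [|split].
  - rewrite B4, A4, !sigma_id; auto. rewrite sigma_id; auto.
  - rewrite B1, B2, A3'. unfold g2sem, clip01.
    rewrite (sigma_abs (4 * sigma1 (2 * u2 x r) - 1) 5) by (try lra; unfold Rabs; destruct Rcase_abs; lra).
    rewrite (sigma_abs (4 * sigma1 (2 * u2 x r) - 1 - 1) 5) by (try lra; unfold Rabs; destruct Rcase_abs; lra).
    reflexivity.
  - intros Hpos. apply clip01_pos in Hpos.
    assert (Hc2 : 2 * dl2 < sigma1 (2 * u2 x r)) by lra.
    pose proof (gate_good (u2 x r) dl2 ltac:(lra) Hc2) as Hk.
    rewrite B0, A0, A1, A2. apply quant_exact; [lra|lra|exact Hk].
Qed.

Lemma idx2_lt : forall x r, in_cube d a b x -> (r < 2)%nat -> (idx2 x r < K2 * S d + 2)%nat.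
Proof.
  intros x r Hx Hr. pose proof (u2_bound x r Hx Hr) as Hu. unfold idx2.
  assert (H1 : (2 <= Int_part (u2 x r))%Z) by (apply Int_part_ge; simpl; lra).
  assert (H2 : (Int_part (u2 x r) <= Z.of_nat (K2 * S d) + 2)%Z).
  { apply Int_part_le. rewrite plus_IZR, <- INR_IZR_INZ, mult_INR. unfold mR in Hu. simpl (IZR 2). lra. }
  lia.
Qed.

Lemma C8 : forall x r, in_cube d a b x -> (r < 2)%nat ->
  HN x 8 (ix 1 0 r) = g2sem x r /\
  (0 < g2sem x r -> INR (K2 * S d + 2) + 1 < P2 r -> 0 <= w2 r ->
     HN x 8 (ix 0 0 r) = sigma1 (w2 r / (P2 r - INR (idx2 x r)))).
Proof.
  intros x r Hx Hr.
  destruct (E8 x r Hr) as [A0 A1]. destruct (E9 x r Hr) as [B0 B1].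
  destruct (C7 x r Hx Hr) as [C4' [Cg Cq]].
  pose proof (clip01_bound (4 * sigma1 (2 * u2 x r) - 1)) as Hgb. fold (g2sem x r) in Hgb.
  split.
  - rewrite B1, A1, <- Cg, !sigma_id; auto. rewrite sigma_id; auto.
  - intros Hpos HP Hw. rewrite B0, A0, C4', (Cq Hpos).
    pose proof mR_pos. pose proof (u2_bound x r Hx Hr) as Hu.
    assert (H1 : (2 <= Int_part (u2 x r))%Z) by (apply Int_part_ge; simpl; lra).
    assert (E : INR K2 * (mR * (Sv x / mR)) + INR r / 2 - (u2 x r - IZR (Int_part (u2 x r))) - (P2 r - 1)
                = INR (idx2 x r) - (P2 r - 1)).
    { unfold idx2. rewrite (INR_IZR_INZ (Z.to_nat _)), Z2Nat.id by lia. rewrite minus_IZR. unfold u2. simpl. field. lra. }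
    rewrite E.
    pose proof (lt_INR _ _ (idx2_lt x r Hx Hr)) as Hn.
    rewrite (sigma_neg (INR (idx2 x r) - (P2 r - 1))) by lra.
    replace (w2 r * ((INR (idx2 x r) - (P2 r - 1)) / (1 - (INR (idx2 x r) - (P2 r - 1))) + 1))
      with (w2 r / (P2 r - INR (idx2 x r))) by (field; lra).
    apply sigma_pos. apply Rmult_le_pos; [exact Hw| left; apply Rinv_0_lt_compat; lra].
Qed.

Lemma Rmax_abs : forall p q, Rmax p q = (Rabs (p - q) + p + q) / 2.
Proof. intros p q. unfold Rmax; destruct Rle_dec; unfold Rabs; destruct Rcase_abs; lra. Qed.

Lemma Cout : forall x, in_cube d a b x ->
  network d NN 11 W0 c0 Ws cs WL cL x =
  lo + (hi - lo) * Rmax (HN x 8 (ix 0 0 0) - 1 + g2sem x 0) (HN x 8 (ix 0 0 1) - 1 + g2sem x 1).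
Proof.
  intros x Hx. rewrite Eout, E11. destruct (E10 x) as [A0 A1]. rewrite A0, A1.
  destruct (C8 x 0 Hx ltac:(lia)) as [G0 _]. destruct (C8 x 1 Hx ltac:(lia)) as [G1 _].
  unfold yv. rewrite G0, G1.
  set (y0 := HN x 8 (ix 0 0 0) - 1 + g2sem x 0). set (y1 := HN x 8 (ix 0 0 1) - 1 + g2sem x 1).
  pose proof (H_bound x 7 (ix 0 0 0)) as B0. pose proof (H_bound x 7 (ix 0 0 1)) as B1.
  pose proof (clip01_bound (4 * sigma1 (2 * u2 x 0) - 1)) as Q0. fold (g2sem x 0) in Q0.
  pose proof (clip01_bound (4 * sigma1 (2 * u2 x 1) - 1)) as Q1. fold (g2sem x 1) in Q1.
  assert (Y0 : -2 <= y0 <= 1) by (unfold y0; unfold Rabs in B0; destruct Rcase_abs in B0; lra).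
  assert (Y1 : -2 <= y1 <= 1) by (unfold y1; unfold Rabs in B1; destruct Rcase_abs in B1; lra).
  assert (S0 : sigma ((y0 - y1) / 4 + 2) = Rabs (y0 - y1) / 4).
  { pose proof (sigma_abs (y0 - y1) 4 ltac:(lra)). 
    assert (Rabs (y0 - y1) <= 4) by (unfold Rabs; destruct Rcase_abs; lra). lra. }
  rewrite S0. rewrite (sigma_id ((y0 + y1 + 4) / 8)) by lra.
  rewrite sigma_id.
  - rewrite Rmax_abs. field.
  - split; unfold Rabs; destruct Rcase_abs; lra.
Qed.

End Net.

Lemma F_close : forall C e1 m eta Fx Fy Sx Sy h, 0 < e1 -> 1 <= m ->
  0 <= Fx <= 1 -> 0 <= Fy <= 1 -> C = (4 * m + 2) / e1 -> eta = exp (- C * (1 + e1)) / 2 ->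
  0 < h <= exp (- C) ->
  exp (C * (Fx - e1 - 1)) - eta <= Sx -> Sy <= m * (exp (C * (Fy + e1 - 1)) + eta) -> Sx <= Sy + h ->
  Fx - Fy < 3 * e1.
Proof.
  intros C e1 m eta Fx Fy Sx Sy h He1 Hm HFx HFy HC Heta Hh H1 H2 H3.
  assert (HCpos : 0 < C) by (rewrite HC; apply Rdiv_lt_0_compat; lra).
  assert (HCe : C * e1 = 4 * m + 2) by (rewrite HC; field; lra).
  set (A := exp (C * (Fy + e1 - 1))) in *.
  assert (HA1 : exp (- C) <= A).
  { unfold A. destruct (Req_dec (- C) (C * (Fy + e1 - 1))) as [E|E]; [rewrite E; lra|].
    left. apply exp_increasing. assert (0 < C * (Fy + e1)) by (apply Rmult_lt_0_compat; lra). lra. }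
  assert (Heta2 : 2 * eta <= exp (- C)).
  { rewrite Heta. replace (2 * (exp (- C * (1 + e1)) / 2)) with (exp (- C * (1 + e1))) by field.
    destruct (Req_dec (- C * (1 + e1)) (- C)) as [E|E]; [rewrite E; lra|].
    left. apply exp_increasing. assert (0 < C * e1) by (apply Rmult_lt_0_compat; lra). lra. }
  assert (Hetapos : 0 < eta) by (rewrite Heta; pose proof (exp_pos (- C * (1 + e1))); lra).
  assert (HB : 2 * eta <= exp (C * (Fx - e1 - 1))).
  { rewrite Heta. replace (2 * (exp (- C * (1 + e1)) / 2)) with (exp (- C * (1 + e1))) by field.
    destruct (Req_dec (- C * (1 + e1)) (C * (Fx - e1 - 1))) as [E|E]; [rewrite E; lra|].
    left. apply exp_increasing. assert (0 <= C * Fx) by (apply Rmult_le_pos; lra). lra. }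
  assert (Key : exp (C * (Fx - e1 - 1)) <= (4 * m + 2) * A).
  { assert (exp (C * (Fx - e1 - 1)) / 2 <= Sx) by lra.
    assert (m * eta <= m * A) by (apply Rmult_le_compat_l; lra).
    assert (Sy + h <= (2 * m + 1) * A) by lra. lra. }
  assert (E : exp (C * (Fx - e1 - 1)) = exp (C * (Fx - Fy - 2 * e1)) * A).
  { unfold A. rewrite <- exp_plus. f_equal. ring. }
  rewrite E in Key.
  assert (HApos : 0 < A) by apply exp_pos.
  assert (K2 : exp (C * (Fx - Fy - 2 * e1)) <= 4 * m + 2).
  { apply Rmult_le_reg_r with A; auto. }
  assert (K3 : 4 * m + 2 < exp (C * e1)).
  { rewrite HCe. pose proof (exp_ineq1 (4 * m + 2) ltac:(lra)). lra. }
  destruct (Rlt_le_dec (Fx - Fy - 2 * e1) e1) as [L|L]; [lra|].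
  exfalso. assert (exp (C * e1) <= exp (C * (Fx - Fy - 2 * e1))).
  { destruct (Req_dec (C * e1) (C * (Fx - Fy - 2 * e1))) as [E2|E2]; [rewrite E2; lra|].
    left. apply exp_increasing. assert (C * e1 <= C * (Fx - Fy - 2 * e1)) by (apply Rmult_le_compat_l; lra). lra. }
  lra.
Qed.

Lemma IZR_small : forall z, Rabs (IZR z) < 1 -> z = 0%Z.
Proof.
  intros z H. assert (-1 < IZR z < 1) by (unfold Rabs in H; destruct Rcase_abs in H; lra).
  destruct H0 as [H1 H2]. apply lt_IZR in H1. apply lt_IZR in H2. lia.
Qed.

Section Final.
Variables (d K K2 : nat) (a b : R) (Pm wm P2 w2 : nat -> R).
Hypothesis Hd : (0 < d)%nat.
Hypothesis Hab : a < b.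

Lemma cover : forall x, in_cube d a b x -> exists g, (g < S d)%nat /\ Gsem d K a b x g = 1.
Proof.
  intros x Hx. pose proof (mR_ge1 d) as HmR.
  destruct (pigeon d (S d) (fun l g => cgl d K a b x g l < / mR d)) as [g [Hg Hav]].
  - lia.
  - intros l g g' Hl Hg Hg' H1 H2.
    destruct (spoil _ _ H1) as [q Hq]. destruct (spoil _ _ H2) as [q' Hq'].
    set (z := (Z.of_nat g' - Z.of_nat g - Z.of_nat (S d) * (q' - q))%Z).
    assert (Ez : IZR z = mR d * ((uu d K a b x g' l - IZR q') - (uu d K a b x g l - IZR q))).
    { unfold z, uu, mR. rewrite !minus_IZR, mult_IZR, !minus_IZR, <- !INR_IZR_INZ. field.
      rewrite S_INR; pose proof (pos_INR d); lra. }
    assert (Hz : Rabs (IZR z) < 1).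
    { rewrite Ez, Rabs_mult, Rabs_right by lra.
      assert (Rabs ((uu d K a b x g' l - IZR q') - (uu d K a b x g l - IZR q)) < / mR d).
      { eapply Rle_lt_trans; [apply Rabs_triang|]. rewrite Rabs_Ropp. lra. }
      apply Rmult_lt_reg_l with (/ mR d); [apply Rinv_0_lt_compat; lra|].
      rewrite <- Rmult_assoc, Rinv_l by lra. lra. }
    apply IZR_small in Hz. unfold z in Hz.
    destruct (Z.lt_trichotomy (q' - q) 0) as [Hn|[H0|Hp]].
    + assert (Z.of_nat (S d) * (q' - q) <= - Z.of_nat (S d))%Z by nia. lia.
    + rewrite H0 in Hz. lia.
    + assert (Z.of_nat (S d) * (q' - q) >= Z.of_nat (S d))%Z by nia. lia.
  - exists g. split; [exact Hg|].
    assert (Hall : forall l, (l < d)%nat -> gsem d K a b x g l = 1).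
    { intros l Hl. specialize (Hav l Hl). apply Rnot_lt_le in Hav. unfold gsem. apply clip01_ge1.
      apply Rmult_le_compat_l with (r := 2 * mR d) in Hav; [|lra].
      rewrite Rmult_assoc, Rinv_r in Hav by lra. lra. }
    unfold Gsem. rewrite (sumn_ext _ _ (fun _ => 1)) by exact Hall.
    rewrite sumn_const. apply clip01_ge1. lra.
Qed.

Lemma same_cell : forall x y g, in_cube d a b x -> in_cube d a b y -> (g < S d)%nat -> (0 < K)%nat ->
  idxm d K a b x g = idxm d K a b y g -> forall l, (l < d)%nat -> Rabs (x l - y l) < (b - a) / INR K.
Proof.
  intros x y g Hx Hy Hg HK E l Hl.
  assert (Dx : forall l, (l < d)%nat -> (Z.to_nat (kk d K a b x g l - 2) < S K)%nat).
  { intros l0 Hl0. pose proof (kk_bound d K a b Hd Hab x g l0 Hx Hg Hl0). lia. }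
  assert (Dy : forall l, (l < d)%nat -> (Z.to_nat (kk d K a b y g l - 2) < S K)%nat).
  { intros l0 Hl0. pose proof (kk_bound d K a b Hd Hab y g l0 Hy Hg Hl0). lia. }
  assert (Hd' := digits_unique d (S K) _ _ ltac:(lia) Dx Dy E l Hl).
  pose proof (kk_bound d K a b Hd Hab x g l Hx Hg Hl). pose proof (kk_bound d K a b Hd Hab y g l Hy Hg Hl).
  cbv beta in Hd'. assert (Ek : kk d K a b x g l = kk d K a b y g l) by lia.
  unfold kk in Ek.
  destruct (base_Int_part (uu d K a b x g l)) as [A1 A2]. destruct (base_Int_part (uu d K a b y g l)) as [B1 B2].
  rewrite Ek in A1, A2.
  assert (Hu : Rabs (uu d K a b x g l - uu d K a b y g l) < 1) by (unfold Rabs; destruct Rcase_abs; lra).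
  assert (HKp : 0 < INR K) by (apply lt_0_INR; lia).
  assert (Eq : uu d K a b x g l - uu d K a b y g l = INR K / (b - a) * (x l - y l)).
  { pose proof (mR_pos d Hd). unfold uu, tt. field. split; lra. }
  rewrite Eq in Hu.
  rewrite Rabs_mult, Rabs_right in Hu by (apply Rle_ge, Rlt_le, Rdiv_lt_0_compat; lra).
  apply Rmult_lt_reg_l with (INR K / (b - a)); [apply Rdiv_lt_0_compat; lra|].
  replace (INR K / (b - a) * ((b - a) / INR K)) with 1 by (field; lra). exact Hu.
Qed.

Lemma g2_cover : forall x, in_cube d a b x -> exists r, (r < 2)%nat /\ g2sem d K K2 a b Pm wm P2 w2 x r = 1.
Proof.
  intros x Hx.
  assert (E : 2 * u2 d K K2 a b Pm wm P2 w2 x 1 = 2 * u2 d K K2 a b Pm wm P2 w2 x 0 + 1)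
    by (unfold u2; simpl; field).
  pose proof (sigma1_comp (2 * u2 d K K2 a b Pm wm P2 w2 x 0)) as Hc. rewrite <- E in Hc.
  destruct (Rle_lt_dec (1/2) (sigma1 (2 * u2 d K K2 a b Pm wm P2 w2 x 0))) as [H0|H0].
  - exists 0%nat. split; [lia|]. unfold g2sem. apply clip01_ge1. lra.
  - exists 1%nat. split; [lia|]. unfold g2sem. apply clip01_ge1. lra.
Qed.

Lemma same_cell2 : forall x y r, in_cube d a b x -> in_cube d a b y -> (r < 2)%nat -> (0 < K2)%nat ->
  idx2 d K K2 a b Pm wm P2 w2 x r = idx2 d K K2 a b Pm wm P2 w2 y r ->
  Rabs (Sv d K K2 a b Pm wm P2 w2 x - Sv d K K2 a b Pm wm P2 w2 y) < / INR K2.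
Proof.
  intros x y r Hx Hy Hr HK E. unfold idx2 in E.
  pose proof (u2_bound d K K2 a b Pm wm P2 w2 Hd Hab x r Hx Hr) as Ux.
  pose proof (u2_bound d K K2 a b Pm wm P2 w2 Hd Hab y r Hy Hr) as Uy.
  assert (H1 : (2 <= Int_part (u2 d K K2 a b Pm wm P2 w2 x r))%Z) by (apply Int_part_ge; simpl; lra).
  assert (H2 : (2 <= Int_part (u2 d K K2 a b Pm wm P2 w2 y r))%Z) by (apply Int_part_ge; simpl; lra).
  assert (Ek : Int_part (u2 d K K2 a b Pm wm P2 w2 x r) = Int_part (u2 d K K2 a b Pm wm P2 w2 y r)) by lia.
  destruct (base_Int_part (u2 d K K2 a b Pm wm P2 w2 x r)) as [A1 A2].
  destruct (base_Int_part (u2 d K K2 a b Pm wm P2 w2 y r)) as [B1 B2].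
  rewrite Ek in A1, A2.
  assert (Hu : Rabs (u2 d K K2 a b Pm wm P2 w2 x r - u2 d K K2 a b Pm wm P2 w2 y r) < 1) by (unfold Rabs; destruct Rcase_abs; lra).
  assert (HKp : 0 < INR K2) by (apply lt_0_INR; lia).
  replace (u2 d K K2 a b Pm wm P2 w2 x r - u2 d K K2 a b Pm wm P2 w2 y r)
    with (INR K2 * (Sv d K K2 a b Pm wm P2 w2 x - Sv d K K2 a b Pm wm P2 w2 y)) in Hu by (unfold u2; ring).
  rewrite Rabs_mult, Rabs_right in Hu by lra.
  apply Rmult_lt_reg_l with (INR K2); [lra|]. rewrite Rinv_r by lra. exact Hu.
Qed.

End Final.

Theorem theorem1 (d : nat) (a b : R) (f : (nat -> R) -> R) :
  (0 < d)%nat -> a < b -> cont_on_cube d a b f ->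
  forall eps, eps > 0 ->
  exists phi, in_H d (36 * d * (2 * d + 1)) 11 phi /\
    forall x, in_cube d a b x -> Rabs (phi x - f x) < eps.
Proof.
  intros Hd Hab Hf eps Heps.
  destruct (bounded_f d a b f Hab Hf) as [Mf [HMf HfM]].
  set (F := fun x => (f x + Mf) / (2 * Mf)).
  assert (HF : forall x, in_cube d a b x -> 0 <= F x <= 1).
  { intros x Hx. specialize (HfM x Hx). unfold F.
    assert (-Mf <= f x <= Mf) by (unfold Rabs in HfM; destruct Rcase_abs in HfM; lra).
    split.
    - apply Rmult_le_pos; [lra| left; apply Rinv_0_lt_compat; lra].
    - apply Rmult_le_reg_r with (2 * Mf); [lra|]. replace ((f x + Mf) / (2 * Mf) * (2 * Mf)) with (f x + Mf) by (field; lra). lra. }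
  set (e1 := eps / (8 * Mf)).
  assert (He1 : 0 < e1) by (unfold e1; apply Rdiv_lt_0_compat; lra).
  destruct (unif_cont d a b f Hab Hf (2 * Mf * e1) ltac:(apply Rmult_lt_0_compat; lra)) as [du [Hdu Hu]].
  assert (HFu : forall x y, in_cube d a b x -> in_cube d a b y -> (forall l, (l < d)%nat -> Rabs (x l - y l) < du) ->
            Rabs (F x - F y) < e1).
  { intros x y Hx Hy Hxy. specialize (Hu x y Hx Hy Hxy). unfold F.
    replace ((f x + Mf) / (2 * Mf) - (f y + Mf) / (2 * Mf)) with ((f x - f y) / (2 * Mf)) by (field; lra).
    unfold Rdiv. rewrite Rabs_mult, (Rabs_right (/ (2 * Mf))) by (left; apply Rinv_0_lt_compat; lra).
    apply Rmult_lt_reg_r with (2 * Mf); [lra|]. rewrite Rmult_assoc, Rinv_l by lra. lra. }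
  destruct (INR_unbounded ((b - a) / du)) as [K HK].
  assert (HKpos : (0 < K)%nat).
  { destruct K; [|lia]. simpl in HK. assert (0 < (b - a) / du) by (apply Rdiv_lt_0_compat; lra). lra. }
  assert (HKR : 0 < INR K) by (apply lt_0_INR; lia).
  assert (HKd : (b - a) / INR K < du).
  { apply Rmult_lt_reg_r with (INR K); [lra|]. replace ((b - a) / INR K * INR K) with (b - a) by (field; lra).
    apply Rmult_lt_reg_l with (/ du); [apply Rinv_0_lt_compat; lra|].
    replace (/ du * (b - a)) with ((b - a) / du) by (unfold Rdiv; ring).
    replace (/ du * (du * INR K)) with (INR K) by (field; lra). lra. }
  pose proof (mR_ge1 d) as HmR.
  set (C := (4 * mR d + 2) / e1).
  assert (HC : 0 < C) by (unfold C; apply Rdiv_lt_0_compat; lra).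
  set (eta := exp (- C * (1 + e1)) / 2).
  assert (Heta : 0 < eta) by (unfold eta; pose proof (exp_pos (- C * (1 + e1))); lra).
  set (M := (S K ^ d)%nat).
  set (x0 := fun _ : nat => a).
  assert (Hx0 : in_cube d a b x0) by (intros i Hi; unfold x0; lra).
  set (pickm := fun g n => epsilon (inhabits x0) (fun y => in_cube d a b y /\ 0 < Gsem d K a b y g /\ idxm d K a b y g = n)).
  set (tau := fun g n => exp (C * (clip01 (F (pickm g n)) - 1))).
  assert (Htau : forall g n, 0 <= tau g n <= 1).
  { intros g n. unfold tau. split; [left; apply exp_pos|].
    pose proof (clip01_bound (F (pickm g n))).
    assert (C * (clip01 (F (pickm g n)) - 1) <= 0).
    { assert (0 <= C * (1 - clip01 (F (pickm g n)))) by (apply Rmult_le_pos; lra). lra. }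
    destruct (Req_dec (C * (clip01 (F (pickm g n)) - 1)) 0) as [E|E]; [rewrite E, exp_0; lra|].
    left. rewrite <- exp_0 at 2. apply exp_increasing. lra. }
  assert (Hlk : forall g : nat, {pw : R * R | INR M + 1 < fst pw /\ 0 <= snd pw /\
      forall n, (n < M)%nat -> Rabs (sigma1 (snd pw / (fst pw - INR n)) - tau g n) < eta}).
  { intros g. apply constructive_indefinite_description.
    destruct (lookup M (tau g) eta (fun n _ => Htau g n) Heta) as [P [w [H1 [H2 H3]]]].
    exists (P, w). simpl. auto. }
  set (Pm := fun g => fst (proj1_sig (Hlk g))).
  set (wm := fun g => snd (proj1_sig (Hlk g))).
  assert (HPm : forall g, INR M + 1 < Pm g /\ 0 <= wm g /\
      forall n, (n < M)%nat -> Rabs (sigma1 (wm g / (Pm g - INR n)) - tau g n) < eta).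
  { intros g. unfold Pm, wm. exact (proj2_sig (Hlk g)). }
  destruct (INR_unbounded (exp C)) as [K2 HK2].
  assert (HK2pos : (0 < K2)%nat).
  { destruct K2; [|lia]. simpl in HK2. pose proof (exp_pos C). lra. }
  assert (HK2R : 0 < INR K2) by (apply lt_0_INR; lia).
  assert (Hh : 0 < / INR K2 <= exp (- C)).
  { split; [apply Rinv_0_lt_compat; lra|]. rewrite exp_Ropp. left. apply Rinv_lt_contravar; [|lra].
    apply Rmult_lt_0_compat; [apply exp_pos| lra]. }
  set (z0 := fun _ : nat => 0).
  set (pick2 := fun r k => epsilon (inhabits x0) (fun y => in_cube d a b y /\
       0 < g2sem d K K2 a b Pm wm z0 z0 y r /\ idx2 d K K2 a b Pm wm z0 z0 y r = k)).
  set (tau2 := fun r k => clip01 (F (pick2 r k))).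
  set (M2 := (K2 * S d + 2)%nat).
  assert (Hlk2 : forall r : nat, {pw : R * R | INR M2 + 1 < fst pw /\ 0 <= snd pw /\
      forall k, (k < M2)%nat -> Rabs (sigma1 (snd pw / (fst pw - INR k)) - tau2 r k) < e1}).
  { intros r. apply constructive_indefinite_description.
    destruct (lookup M2 (tau2 r) e1 (fun k _ => clip01_bound _) He1) as [P [w [H1 [H2 H3]]]].
    exists (P, w). simpl. auto. }
  set (P2 := fun r => fst (proj1_sig (Hlk2 r))).
  set (w2 := fun r => snd (proj1_sig (Hlk2 r))).
  assert (HP2 : forall r, INR M2 + 1 < P2 r /\ 0 <= w2 r /\
      forall k, (k < M2)%nat -> Rabs (sigma1 (w2 r / (P2 r - INR k)) - tau2 r k) < e1).
  { intros r. unfold P2, w2. exact (proj2_sig (Hlk2 r)). }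
  exists (network d (NN d) 11 (W0 d K a b) (c0 d K a b) (Ws d K K2 wm w2) (cs d K K2 Pm wm P2 w2)
            (WL d (- Mf) Mf) (cL (- Mf) Mf)).
  split.
  { exists (W0 d K a b), (c0 d K a b), (Ws d K K2 wm w2), (cs d K K2 Pm wm P2 w2), (WL d (- Mf) Mf), (cL (- Mf) Mf).
    intros x. reflexivity. }
  assert (Main : forall y, in_cube d a b y ->
     exp (C * (F y - e1 - 1)) - eta <= Sv d K K2 a b Pm wm z0 z0 y <=
     mR d * (exp (C * (F y + e1 - 1)) + eta)).
  { intros y Hy.
    set (E := fun g => HN d K K2 a b Pm wm z0 z0 y 3 (ix d 0 0 g)).
    assert (HE : forall g, (g < S d)%nat -> 0 < Gsem d K a b y g ->
       0 <= E g /\ exp (C * (F y - e1 - 1)) - eta < E g < exp (C * (F y + e1 - 1)) + eta).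
    { intros g Hg HG.
      set (n := idxm d K a b y g).
      assert (Hex : exists y', in_cube d a b y' /\ 0 < Gsem d K a b y' g /\ idxm d K a b y' g = n) by (exists y; auto).
      pose proof (epsilon_spec (inhabits x0) _ Hex) as [Hy' [HG' Hn']]. fold (pickm g n) in Hy', HG', Hn'.
      assert (HFF : Rabs (F y - F (pickm g n)) < e1).
      { apply HFu; auto. intros l Hl. eapply Rlt_trans; [|exact HKd].
        apply (same_cell d K a b Hd Hab y (pickm g n) g Hy Hy' Hg HKpos); auto. }
      destruct (HPm g) as [HP [Hw Hacc]].
      assert (EE : E g = sigma1 (wm g / (Pm g - INR n))) by (apply C4; auto).
      specialize (Hacc n (idxm_lt d K a b Hd Hab y g Hy Hg)).
      rewrite <- EE in Hacc. unfold tau in Hacc. rewrite clip01_id in Hacc by (apply HF; auto).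
      assert (L1 : exp (C * (F y - e1 - 1)) < exp (C * (F (pickm g n) - 1))).
      { apply exp_increasing. apply Rmult_lt_compat_l; [lra|]. unfold Rabs in HFF; destruct Rcase_abs in HFF; lra. }
      assert (L2 : exp (C * (F (pickm g n) - 1)) < exp (C * (F y + e1 - 1))).
      { apply exp_increasing. apply Rmult_lt_compat_l; [lra|]. unfold Rabs in HFF; destruct Rcase_abs in HFF; lra. }
      split; [rewrite EE; apply sigma1_bound|].
      unfold Rabs in Hacc; destruct Rcase_abs in Hacc; lra. }
    assert (HEb : forall g, Rabs (E g) <= 1) by (intros; apply H_bound).
    set (out := fun g => clip01 (E g - 1 + Gsem d K a b y g)).
    assert (SvE : Sv d K K2 a b Pm wm z0 z0 y = sumn (S d) out) by (apply Sv_eq; auto).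
    assert (Hup0 : 0 < exp (C * (F y + e1 - 1)) + eta) by (pose proof (exp_pos (C * (F y + e1 - 1))); lra).
    assert (Hout : forall g, (g < S d)%nat -> 0 <= out g <= exp (C * (F y + e1 - 1)) + eta).
    { intros g Hg. split; [apply clip01_bound|]. unfold out.
      pose proof (Gsem_bound d K a b y g) as HGb.
      destruct (Rlt_le_dec 0 (Gsem d K a b y g)) as [HG|HG].
      - destruct (HE g Hg HG) as [HE0 [_ HE2]].
        eapply Rle_trans; [apply clip01_le|]. unfold Rmax; destruct Rle_dec; lra.
      - rewrite clip01_le0; [lra|]. specialize (HEb g). unfold Rabs in HEb; destruct Rcase_abs in HEb; lra. }
    destruct (cover d K a b Hd y Hy) as [j0 [Hj0 HG1]].
    assert (Hj0out : exp (C * (F y - e1 - 1)) - eta <= out j0).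
    { destruct (HE j0 Hj0 ltac:(lra)) as [HE0 [HE1 HE2]]. unfold out. rewrite HG1.
      rewrite clip01_id; [lra|]. specialize (HEb j0). unfold Rabs in HEb; destruct Rcase_abs in HEb; lra. }
    rewrite SvE. split.
    - eapply Rle_trans; [exact Hj0out|]. apply sumn_ge_one; [exact Hj0|]. intros k Hk; apply Hout; auto.
    - pose proof (sumn_le_const (S d) out _ (fun k Hk => proj2 (Hout k Hk))). unfold mR. exact H. }
  intros x Hx.
  rewrite (Cout d K K2 a b (- Mf) Mf Pm wm P2 w2 Hd Hab x Hx).
  (* identify the real parameters' semantic quantities with the dummy ones *)
  assert (Eg2 : forall y r, g2sem d K K2 a b Pm wm P2 w2 y r = g2sem d K K2 a b Pm wm z0 z0 y r) by reflexivity.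
  assert (Ei2 : forall y r, idx2 d K K2 a b Pm wm P2 w2 y r = idx2 d K K2 a b Pm wm z0 z0 y r) by reflexivity.
  assert (One : forall r, (r < 2)%nat -> 0 < g2sem d K K2 a b Pm wm P2 w2 x r ->
     Rabs (HN d K K2 a b Pm wm P2 w2 x 8 (ix d 0 0 r) - F x) < 4 * e1).
  { intros r Hr Hg.
    set (k := idx2 d K K2 a b Pm wm z0 z0 x r).
    assert (Hex : exists y', in_cube d a b y' /\ 0 < g2sem d K K2 a b Pm wm z0 z0 y' r /\ idx2 d K K2 a b Pm wm z0 z0 y' r = k)
      by (exists x; rewrite <- Eg2; auto).
    pose proof (epsilon_spec (inhabits x0) _ Hex) as [Hy' [Hg' Hk']]. fold (pick2 r k) in Hy', Hg', Hk'.
    set (y := pick2 r k) in *.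
    assert (HS : Rabs (Sv d K K2 a b Pm wm z0 z0 x - Sv d K K2 a b Pm wm z0 z0 y) < / INR K2).
    { apply (same_cell2 d K K2 a b Pm wm z0 z0 Hd Hab x y r Hx Hy' Hr HK2pos). rewrite Hk'. reflexivity. }
    destruct (Main x Hx) as [Mx1 Mx2]. destruct (Main y Hy') as [My1 My2].
    pose proof (HF x Hx). pose proof (HF y Hy').
    assert (D1 : F x - F y < 3 * e1).
    { apply (F_close C e1 (mR d) eta (F x) (F y) (Sv d K K2 a b Pm wm z0 z0 x) (Sv d K K2 a b Pm wm z0 z0 y) (/ INR K2));
        auto; try reflexivity.
      unfold Rabs in HS; destruct Rcase_abs in HS; lra. }
    assert (D2 : F y - F x < 3 * e1).
    { apply (F_close C e1 (mR d) eta (F y) (F x) (Sv d K K2 a b Pm wm z0 z0 y) (Sv d K K2 a b Pm wm z0 z0 x) (/ INR K2));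
        auto; try reflexivity.
      unfold Rabs in HS; destruct Rcase_abs in HS; lra. }
    destruct (HP2 r) as [HP [Hw Hacc]].
    destruct (C8 d K K2 a b Pm wm P2 w2 Hd Hab x r Hx Hr) as [_ C8b].
    rewrite (C8b Hg HP Hw). rewrite Ei2. fold k.
    specialize (Hacc k (idx2_lt d K K2 a b Pm wm z0 z0 Hd Hab x r Hx Hr)).
    unfold tau2 in Hacc. fold y in Hacc. rewrite clip01_id in Hacc by auto.
    apply Rabs_def2 in Hacc. destruct Hacc. apply Rabs_def1; lra. }
  set (y0 := HN d K K2 a b Pm wm P2 w2 x 8 (ix d 0 0 0) - 1 + g2sem d K K2 a b Pm wm P2 w2 x 0).
  set (y1 := HN d K K2 a b Pm wm P2 w2 x 8 (ix d 0 0 1) - 1 + g2sem d K K2 a b Pm wm P2 w2 x 1).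
  assert (Up : forall r, (r < 2)%nat ->
     HN d K K2 a b Pm wm P2 w2 x 8 (ix d 0 0 r) - 1 + g2sem d K K2 a b Pm wm P2 w2 x r < F x + 4 * e1).
  { intros r Hr. pose proof (clip01_bound (4 * sigma1 (2 * u2 d K K2 a b Pm wm P2 w2 x r) - 1)) as Hgb.
    fold (g2sem d K K2 a b Pm wm P2 w2 x r) in Hgb.
    pose proof (HF x Hx).
    destruct (Rlt_le_dec 0 (g2sem d K K2 a b Pm wm P2 w2 x r)) as [Hg|Hg].
    - specialize (One r Hr Hg). unfold Rabs in One; destruct Rcase_abs in One; lra.
    - pose proof (H_bound d K K2 a b Pm wm P2 w2 x 7 (ix d 0 0 r)) as HB.
      unfold Rabs in HB; destruct Rcase_abs in HB; lra. }
  assert (Lo : F x - 4 * e1 < Rmax y0 y1).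
  { destruct (g2_cover d K K2 a b Pm wm P2 w2 Hd x Hx) as [r0 [Hr0 Hg0]].
    specialize (One r0 Hr0 ltac:(lra)).
    assert (Hlo : F x - 4 * e1 < HN d K K2 a b Pm wm P2 w2 x 8 (ix d 0 0 r0) - 1 + g2sem d K K2 a b Pm wm P2 w2 x r0).
    { rewrite Hg0. unfold Rabs in One; destruct Rcase_abs in One; lra. }
    destruct r0 as [|[|r0]]; [| |lia].
    - fold y0 in Hlo. eapply Rlt_le_trans; [exact Hlo| apply Rmax_l].
    - fold y1 in Hlo. eapply Rlt_le_trans; [exact Hlo| apply Rmax_r]. }
  assert (Hi : Rmax y0 y1 < F x + 4 * e1).
  { apply Rmax_lub_lt; [apply (Up 0%nat)| apply (Up 1%nat)]; lia. }
  assert (Ef : f x = - Mf + 2 * Mf * F x) by (unfold F; field; lra).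
  rewrite Ef.
  replace (- Mf + (Mf - - Mf) * Rmax y0 y1 - (- Mf + 2 * Mf * F x)) with (2 * Mf * (Rmax y0 y1 - F x)) by ring.
  rewrite Rabs_mult, Rabs_right by lra.
  assert (Rabs (Rmax y0 y1 - F x) < 4 * e1) by (unfold Rabs; destruct Rcase_abs; lra).
  apply Rlt_le_trans with (2 * Mf * (4 * e1)).
  - apply Rmult_lt_compat_l; lra.
  - unfold e1. right. field. lra.
Qed.
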